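(* For every integer $n\ge5$, let $\Delta^3_n$ be the pure $3$-dimensional simplicial complex on the vertex set $\{\pm1,\dots,\pm n\}$ whose facets are the following four-element sets together with their antipodal images (images under $x\mapsto -x$): (a) $\{i,i+1,n-1,n\}$ and $\{-i,-i-1,n-1,n\}$ for $1\le i\le n-3$; (b) $\{1,-(n-2),n-1,n\}$, $\{1,-(n-2),-(n-1),n\}$, $\{1,-(n-2),-(n-1),-n\}$; (c) $\{i,i+1,\ell-2,\ell\}$ and $\{-i,-i-1,\ell-2,\ell\}$ for $5\le \ell\le n$ and $1\le i\le \ell-4$; (d) $\{1,-(\ell-3),\ell-2,\ell\}$, $\{1,-(\ell-3),-(\ell-1),\ell\}$, $\{-(\ell-3),-(\ell-2),-(\ell-1),\ell\}$ for $5\le\ell\le n$; (e) $\{1,2,-3,4\}$, $\{1,2,3,-4\}$, $\{1,-2,3,-4\}$. Then $\Delta^3_n$ (a centrally symmetric simplicial $3$-sphere) is not polytopal: there is no simplicial convex $4$-polytope whose boundary complex is combinatorially isomorphic to $\Delta^3_n$.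
   Context: $\{\Delta^3_n\}$ is Jockusch's family of centrally symmetric cs-$2$-neighborly simplicial $3$-spheres on $2n$ vertices, in the explicit facet description of Novik and Zheng (the facets in (a),(b) form the ball $B^{3,1}_n$). A simplicial $(d-1)$-sphere is polytopal if it is isomorphic to the boundary complex of a simplicial convex $d$-polytope; here $d=4$. *)

(* Defs.v *)
From HB Require Import structures.
From mathcomp Require Import all_boot all_order all_algebra.
From mathcomp Require Import reals.
Set Implicit Arguments. Unset Strict Implicit. Unset Printing Implicit Defensive.
Import Order.TTheory GRing.Theory Num.Theory.
Local Open Scope ring_scope.

(* Vertex type of Delta^3_n: (i, true) is the vertex +(i+1), (i, false) is -(i+1),
   so the vertex set is {+-1, ..., +-n}. *)
Definition vert (n : nat) : finType := ('I_n * bool)%type.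

Definition vtoZ (n : nat) (x : vert n) : int :=
  if x.2 then (x.1.+1)%:Z else - (x.1.+1)%:Z.


Definition base_facets (n : nat) : seq (seq int) :=
  let N := n%:Z in
  [seq [:: i%:Z; i%:Z + 1; N - 1; N] | i <- iota 1 (n - 3)] ++
  [seq [:: - i%:Z; - (i%:Z + 1); N - 1; N] | i <- iota 1 (n - 3)] ++
  [:: [:: 1; - (N - 2); N - 1; N];
      [:: 1; - (N - 2); - (N - 1); N];
      [:: 1; - (N - 2); - (N - 1); - N]] ++
  flatten [seq [seq [:: i%:Z; i%:Z + 1; l%:Z - 2; l%:Z] | i <- iota 1 (l - 4)] ++
               [seq [:: - i%:Z; - (i%:Z + 1); l%:Z - 2; l%:Z] | i <- iota 1 (l - 4)]
          | l <- iota 5 (n - 4)] ++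
  flatten [seq [:: [:: 1; - (l%:Z - 3); l%:Z - 2; l%:Z];
                   [:: 1; - (l%:Z - 3); - (l%:Z - 1); l%:Z];
                   [:: - (l%:Z - 3); - (l%:Z - 2); - (l%:Z - 1); l%:Z]]
          | l <- iota 5 (n - 4)] ++
  [:: [:: 1; 2; -3; 4]; [:: 1; 2; 3; -4]; [:: 1; -2; 3; -4]].

Definition all_facets (n : nat) : seq (seq int) :=
  base_facets n ++ [seq [seq - x | x <- F] | F <- base_facets n].

Definition Delta3 (n : nat) : {set {set vert n}} :=
  [set S : {set vert n} |
    has (fun F => S == [set x : vert n | vtoZ x \in F]) (all_facets n)].

(* Rank of the matrix whose rows are (p v, 1) for v in S: equals
   1 + dimension of the affine hull of p(S). *)
Definition aff_rank (R : realType) (V : finType) (p : V -> 'rV[R]_4)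
    (S : {set V}) : nat :=
  \rank (\matrix_(i < #|S|) row_mx (p (enum_val i)) (1 : 'rV[R]_1)).

Definition is_face_set (R : realType) (V : finType) (p : V -> 'rV[R]_4)
    (S : {set V}) : Prop :=
  exists (a : 'cV[R]_4) (b : R),
    [/\ a != 0,
        forall v, (p v *m a) 0 0 <= b
      & forall v, (v \in S) = ((p v *m a) 0 0 == b)].

(* A pure 3-dimensional simplicial complex on vertex set V with facet set Fs is
   polytopal (over R) if there are distinct points p v in R^4 such that the
   facets (3-dimensional faces) of the convex polytope conv(p(V)) are exactly the
   sets p(F), F in Fs.  When all members of Fs have 4 elements and every vertex
   lies in a facet, this says conv(p(V)) is a simplicial 4-polytope whose
   boundary complex is isomorphic (via p) to the complex. *)
Definition polytopal (R : realType) (V : finType) (Fs : {set {set V}}) : Prop :=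
  exists p : V -> 'rV[R]_4,
    injective p /\
    forall S : {set V}, S \in Fs <-> (is_face_set p S /\ aff_rank p S = 4%N).

(* Main.v *)
Require Import Defs.
From HB Require Import structures.
From mathcomp Require Import all_boot all_order all_algebra.
From mathcomp Require Import reals.
From mathcomp Require Import ring lra.
Import Order.TTheory GRing.Theory Num.Theory.
Local Open Scope ring_scope.

(* Proof outline:
   1. (facet_prod) from a supporting hyperplane of a facet F with affine rank 4,
      the 5x5 determinants [F, x] (rows (p v, 1)) have a constant nonzero sign
      for all vertices x outside F.
   2. (Dm_gp) 3-term Grassmann-Pluecker relations for these determinants.
   3. (cert) a sign-propagation certificate using only the 16 facets of types
      (c),(d) with l = 5, (e), and their antipodes, all present for every n >= 5,
      on the 10 vertices +-1..+-5, leads to a contradiction. *)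
Section Dets.
Variable R : comNzRingType.
Implicit Types f : nat -> nat -> R.
Lemma detS n f : \det (\matrix_(i < n.+1, k < n.+1) f i k) =
  \sum_(j < n.+1) f 0%N j * ((-1) ^+ j * \det (\matrix_(i < n, k < n) f (bump 0 i) (bump j k))).
Proof.
rewrite (expand_det_row _ 0); apply: eq_bigr => j _; rewrite /cofactor !mxE add0n.
congr (_ * (_ * \det _)); apply/matrixP => i k; rewrite !mxE //.
Qed.
Definition det2f f := f 0%N 0%N * f 1%N 1%N - f 0%N 1%N * f 1%N 0%N.
Lemma det2E f : \det (\matrix_(i < 2, k < 2) f i k) = det2f f.
Proof.
rewrite detS !big_ord_recl big_ord0 /= !det_mx11 !mxE /bump /= /det2f; ring.
Qed.
Lemma det2B f h1 h2 : \det (\matrix_(i < 2, k < 2) f (bump h1 i) (bump h2 k)) = det2f (fun a b => f (bump h1 a) (bump h2 b)).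
Proof. exact: (det2E (fun a b => f (bump h1 a) (bump h2 b))). Qed.
Definition det3f f := f 0%N 0%N * det2f (fun i k => f (bump 0 i) (bump 0 k))
  - f 0%N 1%N * det2f (fun i k => f (bump 0 i) (bump 1 k))
  + f 0%N 2%N * det2f (fun i k => f (bump 0 i) (bump 2 k)).
Lemma det3E f : \det (\matrix_(i < 3, k < 3) f i k) = det3f f.
Proof.
rewrite detS !big_ord_recl big_ord0 !det2B /det3f /=. rewrite /bump /=; ring.
Qed.
Lemma det3B f h1 h2 : \det (\matrix_(i < 3, k < 3) f (bump h1 i) (bump h2 k)) = det3f (fun a b => f (bump h1 a) (bump h2 b)).
Proof. exact: (det3E (fun a b => f (bump h1 a) (bump h2 b))). Qed.
Definition det4f f := f 0%N 0%N * det3f (fun i k => f (bump 0 i) (bump 0 k))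
  - f 0%N 1%N * det3f (fun i k => f (bump 0 i) (bump 1 k))
  + f 0%N 2%N * det3f (fun i k => f (bump 0 i) (bump 2 k))
  - f 0%N 3%N * det3f (fun i k => f (bump 0 i) (bump 3 k)).
Lemma det4E f : \det (\matrix_(i < 4, k < 4) f i k) = det4f f.
Proof.
rewrite detS !big_ord_recl big_ord0 !det3B /det4f /=. rewrite /bump /=; ring.
Qed.
Lemma det4B f h1 h2 : \det (\matrix_(i < 4, k < 4) f (bump h1 i) (bump h2 k)) = det4f (fun a b => f (bump h1 a) (bump h2 b)).
Proof. exact: (det4E (fun a b => f (bump h1 a) (bump h2 b))). Qed.
Definition det5f f := f 0%N 0%N * det4f (fun i k => f (bump 0 i) (bump 0 k))
  - f 0%N 1%N * det4f (fun i k => f (bump 0 i) (bump 1 k))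
  + f 0%N 2%N * det4f (fun i k => f (bump 0 i) (bump 2 k))
  - f 0%N 3%N * det4f (fun i k => f (bump 0 i) (bump 3 k))
  + f 0%N 4%N * det4f (fun i k => f (bump 0 i) (bump 4 k)).
Lemma det5E f : \det (\matrix_(i < 5, k < 5) f i k) = det5f f.
Proof.
rewrite detS !big_ord_recl big_ord0 !det4B /det5f /=. rewrite /bump /=; ring.
Qed.
End Dets.
Arguments det2f {R}. Arguments det3f {R}. Arguments det4f {R}. Arguments det5f {R}.

Definition lrow {R : pzRingType} (x : 'rV[R]_4) : 'rV[R]_(4+1) := row_mx x (1 : 'rV_1).
Definition Mof {R : pzRingType} (x1 x2 x3 x4 : 'rV[R]_4) : 'M[R]_(4,4+1) :=
  \matrix_(i < 4) lrow (nth 0 [:: x1; x2; x3; x4] i).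
Definition Dm {R : comPzRingType} (x1 x2 x3 x4 x5 : 'rV[R]_4) : R :=
  \det (col_mx (Mof x1 x2 x3 x4) (lrow x5)).

Section Geo.
Variable R : realFieldType.

Lemma lrow_mul (x : 'rV[R]_4) (a : 'cV_4) (b : R) :
  (lrow x *m col_mx a (- b%:M)) 0 0 = (x *m a) 0 0 - b.
Proof.
rewrite /lrow mul_row_col mul1mx !mxE eqxx /=. by rewrite mulr1n.
Qed.

Lemma detL (M : 'M[R]_(4,4+1)) (u : 'rV_(4+1)) :
  \det (col_mx M u) = (u *m \col_j cofactor (col_mx M 0) (rshift 4 (ord0 : 'I_1)) j) 0 0.
Proof.
rewrite (expand_det_row _ (rshift 4 (ord0 : 'I_1))) mxE; apply: eq_bigr => j _.
rewrite col_mxEd mxE; congr (_ * _); rewrite /cofactor; congr (_ * \det _).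
apply/matrixP => i k; rewrite !mxE.
have -> : lift (rshift 4 (ord0 : 'I_1)) i = lshift 1 i.
  by apply: val_inj; rewrite /= /bump /=; case: i => i /= hi; rewrite leqNgt hi.
by rewrite (unsplitK (inl _ i)).
Qed.

End Geo.

Lemma facet_prod (R : realType) (V : finType) (p : V -> 'rV[R]_4) (S : {set V})
    (v1 v2 v3 v4 : V) :
  is_face_set p S -> aff_rank p S = 4%N -> S = [set v1; v2; v3; v4] ->
  forall x y, x \notin S -> y \notin S ->
  0 < Dm (p v1) (p v2) (p v3) (p v4) (p x) * Dm (p v1) (p v2) (p v3) (p v4) (p y).
Proof.
move=> [a [b [an0 hle hS]]] hrk eS x y hx hy.
set M := Mof (p v1) (p v2) (p v3) (p v4).
set w : 'cV[R]_(4+1) := col_mx a (- b%:M).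
set C := \col_j cofactor (col_mx M 0) (rshift 4 (ord0 : 'I_1)) j.
have rM : \rank M = 4%N.
  transitivity (aff_rank p S); last exact: hrk.
  rewrite /aff_rank; apply/eqP; rewrite eqn_leq !mxrankS //.
    apply/row_subP => j; rewrite rowK.
    move: (enum_val j) (enum_valP j) => v; rewrite eS !inE -!orbA => /or4P [] /eqP ->.
    - by have := row_sub (Ordinal (isT : (0 < 4)%N)) M; rewrite rowK.
    - by have := row_sub (Ordinal (isT : (1 < 4)%N)) M; rewrite rowK.
    - by have := row_sub (Ordinal (isT : (2 < 4)%N)) M; rewrite rowK.
    - by have := row_sub (Ordinal (isT : (3 < 4)%N)) M; rewrite rowK.
  apply/row_subP => i; rewrite rowK.
  have hv : nth v1 [:: v1; v2; v3; v4] i \in S.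
    by rewrite eS; case: i => [[|[|[|[|//]]]] hi]; rewrite !inE eqxx ?orbT.
  have -> : nth 0 [:: p v1; p v2; p v3; p v4] i = p (nth v1 [:: v1; v2; v3; v4] i).
    by case: i {hv} => [[|[|[|[|//]]]] hi].
  rewrite -(enum_rankK_in hv hv).
  have := row_sub (enum_rank_in hv (nth v1 [:: v1; v2; v3; v4] i))
    (\matrix_(i < #|S|) row_mx (p (enum_val i)) (1 : 'rV[R]_1)).
  by rewrite rowK.
have Mw : M *m w = 0.
  apply/row_matrixP => i; rewrite row_mul row0 rowK.
  apply/rowP => k; rewrite ord1 lrow_mul [RHS]mxE; apply/eqP; rewrite subr_eq0.
  have -> : nth 0 [:: p v1; p v2; p v3; p v4] i = p (nth v1 [:: v1; v2; v3; v4] i).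
    by case: i => [[|[|[|[|//]]]] hi].
  by rewrite -hS eS; case: i => [[|[|[|[|//]]]] hi]; rewrite !inE eqxx ?orbT.
have MC : M *m C = 0.
  apply/row_matrixP => i; rewrite row_mul row0; apply/rowP => k; rewrite ord1 [RHS]mxE.
  rewrite -detL.
  apply: (@determinant_alternate _ _ _ (lshift 1 i) (rshift 4 (ord0 : 'I_1))).
    apply/negP => /eqP/(congr1 val) /= e; move: (ltn_ord i); rewrite e addn0 ltnn //.
  by move=> kk; rewrite col_mxEu col_mxEd [RHS]mxE.
have wn0 : w != 0 by rewrite /w col_mx_eq0 negb_and an0.
have sCw : (C^T <= w^T)%MS.
  have kw : (w^T <= kermx M^T)%MS by rewrite sub_kermx -trmx_mul Mw trmx0.
  have kC : (C^T <= kermx M^T)%MS by rewrite sub_kermx -trmx_mul MC trmx0.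
  have rk : \rank (kermx M^T) = 1%N by rewrite mxrank_ker mxrank_tr rM.
  have rw : \rank w^T = 1%N.
    by apply/eqP; rewrite eqn_leq rank_leq_row lt0n mxrank_eq0 trmx_eq0 wn0.
  have := mxrank_leqif_eq kw; rewrite rw rk => /leqif_refl /andP [_ e].
  exact: submx_trans kC e.
have [z eCz] := submxP sCw.
have eC : C = w *m z^T by rewrite -[C]trmxK eCz trmx_mul trmxK.
set mu := z 0 0.
have detE : forall u, \det (col_mx M u) = (u *m w) 0 0 * mu.
  by move=> u; rewrite detL -/C eC mulmxA [LHS]mxE big_ord1 [_^T _ _]mxE.
have mun0 : mu != 0.
  apply/negP => /eqP mu0.
  have [j hj] : exists j, w j 0 != 0.
    apply/existsP; apply: contraR wn0 => /existsPn H.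
    by apply/eqP/matrixP => i k; rewrite ord1 [RHS]mxE; apply/eqP/negPn/H.
  pose u : 'rV[R]_(4+1) := delta_mx 0 j.
  have uw : (u *m w) 0 0 = w j 0 by rewrite -rowE mxE.
  have hr : ~~ row_full (col_mx M u).
    by rewrite row_full_unit unitmxE unitfE detE mu0 mulr0 eqxx.
  move: hr; rewrite /row_full -addsmxE => hr.
  have r4 : \rank (M + u)%MS = 4%N.
    have h1 := mxrankS (addsmxSl M u); rewrite rM in h1.
    apply/eqP; rewrite eqn_leq h1 andbT.
    by have := rank_leq_col (M + u)%MS; rewrite leq_eqVlt (negbTE hr) /= ltnS.
  have := mxrank_leqif_eq (addsmxSl M u); rewrite rM r4 => /leqif_refl /andP [_ e].
  have /submxP [D eD] : (u <= M)%MS.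
    by apply: submx_trans e; apply: addsmxSr.
  move: uw; rewrite eD -mulmxA Mw mulmx0 mxE => /esym /eqP; by rewrite (negbTE hj).
have key : forall v, v \notin S -> (lrow (p v) *m w) 0 0 < 0.
  move=> v hv; rewrite lrow_mul subr_lt0 lt_neqAle hle andbT -hS; exact: hv.
rewrite /Dm -/M !detE.
have kx := key x hx; have ky := key y hy.
rewrite mulrACA; apply: mulr_gt0; first by rewrite nmulr_rgt0.
by rewrite -expr2 exprn_even_gt0 //= mun0 orbT.
Qed.

Section DmPoly.
Variable R : comNzRingType.
Definition gco (x1 x2 x3 x4 x5 : 'rV[R]_4) (a b : nat) : R :=
  if (b < 4)%N then (nth 0 [:: x1; x2; x3; x4; x5] a) 0 (inord b) else 1.
Lemma Dm_mx (x1 x2 x3 x4 x5 : 'rV[R]_4) :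
  col_mx (Mof x1 x2 x3 x4) (lrow x5) = \matrix_(i < 5, k < 5) gco x1 x2 x3 x4 x5 i k.
Proof.
apply/matrixP => i k; rewrite /Mof /lrow !mxE /gco.
case: splitP => i' ->; rewrite !mxE; case: splitP => k' ->; rewrite ?mxE.
- by rewrite ltn_ord inord_val; case: i' => [[|[|[|[|//]]]] hi].
- by rewrite ord1 /=.
- by rewrite !ord1 ltn_ord inord_val.
- by rewrite !ord1 /=.
Qed.
Lemma DmE (x1 x2 x3 x4 x5 : 'rV[R]_4) :
  Dm x1 x2 x3 x4 x5 = det5f (gco x1 x2 x3 x4 x5).
Proof. by rewrite /Dm Dm_mx det5E. Qed.
End DmPoly.
Section DmProps.
Variable R : comNzRingType.
Implicit Types a b c d e f g : 'rV[R]_4.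
Ltac dmring := rewrite !DmE /det5f /det4f /det3f /det2f /gco /bump /=; ring.
Lemma Dm_sw1 a b c d e : Dm a b c d e = - Dm b a c d e. Proof. dmring. Qed.
Lemma Dm_sw2 a b c d e : Dm a b c d e = - Dm a c b d e. Proof. dmring. Qed.
Lemma Dm_sw3 a b c d e : Dm a b c d e = - Dm a b d c e. Proof. dmring. Qed.
Lemma Dm_sw4 a b c d e : Dm a b c d e = - Dm a b c e d. Proof. dmring. Qed.
Lemma Dm_gp a b c d e f g : Dm a b c d e * Dm a b c f g - Dm a b c d f * Dm a b c e g
  + Dm a b c d g * Dm a b c e f = 0.
Proof. dmring. Qed.
End DmProps.


Definition sg (R : pzRingType) (b : bool) : R := if b then -1 else 1.
Definition facl : seq (nat * nat * nat * nat) := [:: (0,2,4,7); (0,2,4,8); (0,2,5,6); (0,2,5,9); (0,3,4,7); (0,3,4,8); (0,3,7,8); (1,2,5,6); (1,2,5,9); (1,2,6,9); (1,3,4,7); (1,3,4,8); (1,3,5,6); (1,3,5,9); (2,4,6,9); (3,5,7,8)].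
Section Cert.
Variable R : realFieldType.
Lemma eqpos (a b : R) : a = b -> 0 < a -> 0 < b.
Proof. by move=> ->. Qed.
Lemma fstep (P Y : R) (t : bool) : 0 < sg R t * (P * Y) -> 0 < P -> 0 < sg R t * Y.
Proof. case: t; rewrite /sg => h hP; nra. Qed.
Lemma gstep (P1 P2 Q1 Q2 U W : R) (t u : bool) :
  sg R t * (P1 * P2) + sg R t * (Q1 * Q2) + sg R u * (U * W) = 0 ->
  0 < P1 -> 0 < P2 -> 0 < Q1 -> 0 < Q2 -> 0 < U -> 0 < sg R (~~ (t (+) u)) * W.
Proof.
move=> H h1 h2 h3 h4 hU.
have p1 : 0 < P1 * P2 by apply: mulr_gt0.
have p2 : 0 < Q1 * Q2 by apply: mulr_gt0.
case: t u H => [] [] /= H; rewrite /sg in H *; nra.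
Qed.
Lemma gfalse (P1 P2 Q1 Q2 U1 U2 : R) (t : bool) :
  sg R t * (P1 * P2) + sg R t * (Q1 * Q2) + sg R t * (U1 * U2) = 0 ->
  0 < P1 -> 0 < P2 -> 0 < Q1 -> 0 < Q2 -> 0 < U1 -> 0 < U2 -> False.
Proof.
move=> H h1 h2 h3 h4 h5 h6.
have p1 : 0 < P1 * P2 by apply: mulr_gt0.
have p2 : 0 < Q1 * Q2 by apply: mulr_gt0.
have p3 : 0 < U1 * U2 by apply: mulr_gt0.
case: t H; rewrite /sg => H; nra.
Qed.
Lemma nzcase (X Y : R) (t : bool) : 0 < X * X -> X = sg R t * Y ->
  0 < sg R false * Y \/ 0 < sg R true * Y.
Proof.
move=> h e; have : Y != 0 by apply/eqP => y0; move: h; rewrite e y0 mulr0 mul0r ltxx.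
rewrite /sg mul1r mulN1r oppr_gt0; case: ltgtP => //; by [left|right].
Qed.
End Cert.
Arguments sg {R}.
Arguments eqpos {R a b}.

Lemma cert_half (R : realFieldType) (D : nat -> nat -> nat -> nat -> nat -> R)
  (sw1 : forall a b c d e, D a b c d e = - D b a c d e)
  (sw2 : forall a b c d e, D a b c d e = - D a c b d e)
  (sw3 : forall a b c d e, D a b c d e = - D a b d c e)
  (sw4 : forall a b c d e, D a b c d e = - D a b c e d)
  (gp : forall a b c d e f g, D a b c d e * D a b c f g - D a b c d f * D a b c e g
                              + D a b c d g * D a b c e f = 0)
  (fac : forall a b c d x y, [&& (a,b,c,d) \in facl, x \notin [:: a; b; c; d],
           y \notin [:: a; b; c; d], (x < 10)%N & (y < 10)%N] ->
         0 < D a b c d x * D a b c d y)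
  (h0 : 0 < D 0 1 2 4 7) : False.
Proof.
have h_01247 : 0 < sg false * D 0 1 2 4 7 by rewrite /sg mul1r.
have [h_01256|h_01256] : 0 < sg false * D 0 1 2 5 6 \/ 0 < sg true * D 0 1 2 5 6.
  apply: (@nzcase _ (D 0 2 5 6 1) _ true (fac 0 2 5 6 1 1 isT)).
  rewrite (sw4 0 2 5 6 1) (sw3 0 2 5 1 6) (sw2 0 2 1 5 6). rewrite /sg /=; ring.
  have h_02347 : 0 < sg true * D 0 2 3 4 7.
    apply: (@fstep _ (sg false * D 0 1 2 4 7) (D 0 2 3 4 7) true _ h_01247).
    apply: (eqpos _ (fac 0 2 4 7 1 3 isT)). rewrite (sw4 0 2 4 7 1) (sw3 0 2 4 1 7) (sw2 0 2 1 4 7) (sw4 0 2 4 7 3) (sw3 0 2 4 3 7). rewrite /sg /=; ring.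
  have h_02457 : 0 < sg false * D 0 2 4 5 7.
    apply: (@fstep _ (sg false * D 0 1 2 4 7) (D 0 2 4 5 7) false _ h_01247).
    apply: (eqpos _ (fac 0 2 4 7 1 5 isT)). rewrite (sw4 0 2 4 7 1) (sw3 0 2 4 1 7) (sw2 0 2 1 4 7) (sw4 0 2 4 7 5). rewrite /sg /=; ring.
  have h_02467 : 0 < sg false * D 0 2 4 6 7.
    apply: (@fstep _ (sg false * D 0 1 2 4 7) (D 0 2 4 6 7) false _ h_01247).
    apply: (eqpos _ (fac 0 2 4 7 1 6 isT)). rewrite (sw4 0 2 4 7 1) (sw3 0 2 4 1 7) (sw2 0 2 1 4 7) (sw4 0 2 4 7 6). rewrite /sg /=; ring.
  have h_02478 : 0 < sg true * D 0 2 4 7 8.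
    apply: (@fstep _ (sg false * D 0 1 2 4 7) (D 0 2 4 7 8) true _ h_01247).
    apply: (eqpos _ (fac 0 2 4 7 1 8 isT)). rewrite (sw4 0 2 4 7 1) (sw3 0 2 4 1 7) (sw2 0 2 1 4 7). rewrite /sg /=; ring.
  have h_02479 : 0 < sg true * D 0 2 4 7 9.
    apply: (@fstep _ (sg false * D 0 1 2 4 7) (D 0 2 4 7 9) true _ h_01247).
    apply: (eqpos _ (fac 0 2 4 7 1 9 isT)). rewrite (sw4 0 2 4 7 1) (sw3 0 2 4 1 7) (sw2 0 2 1 4 7). rewrite /sg /=; ring.
  have h_01248 : 0 < sg true * D 0 1 2 4 8.
    apply: (@fstep _ (sg true * D 0 2 4 7 8) (D 0 1 2 4 8) true _ h_02478).
    apply: (eqpos _ (fac 0 2 4 8 7 1 isT)). rewrite (sw4 0 2 4 8 7) (sw4 0 2 4 8 1) (sw3 0 2 4 1 8) (sw2 0 2 1 4 8). rewrite /sg /=; ring.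
  have h_02348 : 0 < sg false * D 0 2 3 4 8.
    apply: (@fstep _ (sg true * D 0 2 4 7 8) (D 0 2 3 4 8) false _ h_02478).
    apply: (eqpos _ (fac 0 2 4 8 7 3 isT)). rewrite (sw4 0 2 4 8 7) (sw4 0 2 4 8 3) (sw3 0 2 4 3 8). rewrite /sg /=; ring.
  have h_02458 : 0 < sg true * D 0 2 4 5 8.
    apply: (@fstep _ (sg true * D 0 2 4 7 8) (D 0 2 4 5 8) true _ h_02478).
    apply: (eqpos _ (fac 0 2 4 8 7 5 isT)). rewrite (sw4 0 2 4 8 7) (sw4 0 2 4 8 5). rewrite /sg /=; ring.
  have h_02468 : 0 < sg true * D 0 2 4 6 8.
    apply: (@fstep _ (sg true * D 0 2 4 7 8) (D 0 2 4 6 8) true _ h_02478).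
    apply: (eqpos _ (fac 0 2 4 8 7 6 isT)). rewrite (sw4 0 2 4 8 7) (sw4 0 2 4 8 6). rewrite /sg /=; ring.
  have h_01347 : 0 < sg true * D 0 1 3 4 7.
    apply: (@fstep _ (sg true * D 0 2 3 4 7) (D 0 1 3 4 7) true _ h_02347).
    apply: (eqpos _ (fac 0 3 4 7 2 1 isT)). rewrite (sw4 0 3 4 7 2) (sw3 0 3 4 2 7) (sw2 0 3 2 4 7) (sw4 0 3 4 7 1) (sw3 0 3 4 1 7) (sw2 0 3 1 4 7). rewrite /sg /=; ring.
  have h_03478 : 0 < sg false * D 0 3 4 7 8.
    apply: (@fstep _ (sg true * D 0 2 3 4 7) (D 0 3 4 7 8) false _ h_02347).
    apply: (eqpos _ (fac 0 3 4 7 2 8 isT)). rewrite (sw4 0 3 4 7 2) (sw3 0 3 4 2 7) (sw2 0 3 2 4 7). rewrite /sg /=; ring.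
  have h_01348 : 0 < sg false * D 0 1 3 4 8.
    apply: (@fstep _ (sg false * D 0 2 3 4 8) (D 0 1 3 4 8) false _ h_02348).
    apply: (eqpos _ (fac 0 3 4 8 2 1 isT)). rewrite (sw4 0 3 4 8 2) (sw3 0 3 4 2 8) (sw2 0 3 2 4 8) (sw4 0 3 4 8 1) (sw3 0 3 4 1 8) (sw2 0 3 1 4 8). rewrite /sg /=; ring.
  have h_01378 : 0 < sg true * D 0 1 3 7 8.
    apply: (@fstep _ (sg false * D 0 3 4 7 8) (D 0 1 3 7 8) true _ h_03478).
    apply: (eqpos _ (fac 0 3 7 8 4 1 isT)). rewrite (sw4 0 3 7 8 4) (sw3 0 3 7 4 8) (sw4 0 3 7 8 1) (sw3 0 3 7 1 8) (sw2 0 3 1 7 8). rewrite /sg /=; ring.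
  have h_02378 : 0 < sg true * D 0 2 3 7 8.
    apply: (@fstep _ (sg false * D 0 3 4 7 8) (D 0 2 3 7 8) true _ h_03478).
    apply: (eqpos _ (fac 0 3 7 8 4 2 isT)). rewrite (sw4 0 3 7 8 4) (sw3 0 3 7 4 8) (sw4 0 3 7 8 2) (sw3 0 3 7 2 8) (sw2 0 3 2 7 8). rewrite /sg /=; ring.
  have h_13457 : 0 < sg false * D 1 3 4 5 7.
    apply: (@fstep _ (sg true * D 0 1 3 4 7) (D 1 3 4 5 7) false _ h_01347).
    apply: (eqpos _ (fac 1 3 4 7 0 5 isT)). rewrite (sw4 1 3 4 7 0) (sw3 1 3 4 0 7) (sw2 1 3 0 4 7) (sw1 1 0 3 4 7) (sw4 1 3 4 7 5). rewrite /sg /=; ring.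
  have h_13467 : 0 < sg false * D 1 3 4 6 7.
    apply: (@fstep _ (sg true * D 0 1 3 4 7) (D 1 3 4 6 7) false _ h_01347).
    apply: (eqpos _ (fac 1 3 4 7 0 6 isT)). rewrite (sw4 1 3 4 7 0) (sw3 1 3 4 0 7) (sw2 1 3 0 4 7) (sw1 1 0 3 4 7) (sw4 1 3 4 7 6). rewrite /sg /=; ring.
  have h_13479 : 0 < sg true * D 1 3 4 7 9.
    apply: (@fstep _ (sg true * D 0 1 3 4 7) (D 1 3 4 7 9) true _ h_01347).
    apply: (eqpos _ (fac 1 3 4 7 0 9 isT)). rewrite (sw4 1 3 4 7 0) (sw3 1 3 4 0 7) (sw2 1 3 0 4 7) (sw1 1 0 3 4 7). rewrite /sg /=; ring.
  have h_13468 : 0 < sg true * D 1 3 4 6 8.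
    apply: (@fstep _ (sg false * D 0 1 3 4 8) (D 1 3 4 6 8) true _ h_01348).
    apply: (eqpos _ (fac 1 3 4 8 0 6 isT)). rewrite (sw4 1 3 4 8 0) (sw3 1 3 4 0 8) (sw2 1 3 0 4 8) (sw1 1 0 3 4 8) (sw4 1 3 4 8 6). rewrite /sg /=; ring.
  have h_02356 : 0 < sg true * D 0 2 3 5 6.
    apply: (@fstep _ (sg false * D 0 1 2 5 6) (D 0 2 3 5 6) true _ h_01256).
    apply: (eqpos _ (fac 0 2 5 6 1 3 isT)). rewrite (sw4 0 2 5 6 1) (sw3 0 2 5 1 6) (sw2 0 2 1 5 6) (sw4 0 2 5 6 3) (sw3 0 2 5 3 6). rewrite /sg /=; ring.
  have h_02456 : 0 < sg true * D 0 2 4 5 6.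
    apply: (@fstep _ (sg false * D 0 1 2 5 6) (D 0 2 4 5 6) true _ h_01256).
    apply: (eqpos _ (fac 0 2 5 6 1 4 isT)). rewrite (sw4 0 2 5 6 1) (sw3 0 2 5 1 6) (sw2 0 2 1 5 6) (sw4 0 2 5 6 4) (sw3 0 2 5 4 6). rewrite /sg /=; ring.
  have h_02567 : 0 < sg true * D 0 2 5 6 7.
    apply: (@fstep _ (sg false * D 0 1 2 5 6) (D 0 2 5 6 7) true _ h_01256).
    apply: (eqpos _ (fac 0 2 5 6 1 7 isT)). rewrite (sw4 0 2 5 6 1) (sw3 0 2 5 1 6) (sw2 0 2 1 5 6). rewrite /sg /=; ring.
  have h_02568 : 0 < sg true * D 0 2 5 6 8.
    apply: (@fstep _ (sg false * D 0 1 2 5 6) (D 0 2 5 6 8) true _ h_01256).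
    apply: (eqpos _ (fac 0 2 5 6 1 8 isT)). rewrite (sw4 0 2 5 6 1) (sw3 0 2 5 1 6) (sw2 0 2 1 5 6). rewrite /sg /=; ring.
  have h_02569 : 0 < sg true * D 0 2 5 6 9.
    apply: (@fstep _ (sg false * D 0 1 2 5 6) (D 0 2 5 6 9) true _ h_01256).
    apply: (eqpos _ (fac 0 2 5 6 1 9 isT)). rewrite (sw4 0 2 5 6 1) (sw3 0 2 5 1 6) (sw2 0 2 1 5 6). rewrite /sg /=; ring.
  have h_01259 : 0 < sg true * D 0 1 2 5 9.
    apply: (@fstep _ (sg true * D 0 2 5 6 9) (D 0 1 2 5 9) true _ h_02569).
    apply: (eqpos _ (fac 0 2 5 9 6 1 isT)). rewrite (sw4 0 2 5 9 6) (sw4 0 2 5 9 1) (sw3 0 2 5 1 9) (sw2 0 2 1 5 9). rewrite /sg /=; ring.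
  have h_02359 : 0 < sg false * D 0 2 3 5 9.
    apply: (@fstep _ (sg true * D 0 2 5 6 9) (D 0 2 3 5 9) false _ h_02569).
    apply: (eqpos _ (fac 0 2 5 9 6 3 isT)). rewrite (sw4 0 2 5 9 6) (sw4 0 2 5 9 3) (sw3 0 2 5 3 9). rewrite /sg /=; ring.
  have h_02579 : 0 < sg true * D 0 2 5 7 9.
    apply: (@fstep _ (sg true * D 0 2 5 6 9) (D 0 2 5 7 9) true _ h_02569).
    apply: (eqpos _ (fac 0 2 5 9 6 7 isT)). rewrite (sw4 0 2 5 9 6) (sw4 0 2 5 9 7). rewrite /sg /=; ring.
  have h_12356 : 0 < sg false * D 1 2 3 5 6.
    apply: (@fstep _ (sg false * D 0 1 2 5 6) (D 1 2 3 5 6) false _ h_01256).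
    apply: (eqpos _ (fac 1 2 5 6 0 3 isT)). rewrite (sw4 1 2 5 6 0) (sw3 1 2 5 0 6) (sw2 1 2 0 5 6) (sw1 1 0 2 5 6) (sw4 1 2 5 6 3) (sw3 1 2 5 3 6). rewrite /sg /=; ring.
  have h_12569 : 0 < sg false * D 1 2 5 6 9.
    apply: (@fstep _ (sg false * D 0 1 2 5 6) (D 1 2 5 6 9) false _ h_01256).
    apply: (eqpos _ (fac 1 2 5 6 0 9 isT)). rewrite (sw4 1 2 5 6 0) (sw3 1 2 5 0 6) (sw2 1 2 0 5 6) (sw1 1 0 2 5 6). rewrite /sg /=; ring.
  have h_12359 : 0 < sg true * D 1 2 3 5 9.
    apply: (@fstep _ (sg true * D 0 1 2 5 9) (D 1 2 3 5 9) true _ h_01259).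
    apply: (eqpos _ (fac 1 2 5 9 0 3 isT)). rewrite (sw4 1 2 5 9 0) (sw3 1 2 5 0 9) (sw2 1 2 0 5 9) (sw1 1 0 2 5 9) (sw4 1 2 5 9 3) (sw3 1 2 5 3 9). rewrite /sg /=; ring.
  have h_01269 : 0 < sg false * D 0 1 2 6 9.
    apply: (@fstep _ (sg false * D 1 2 5 6 9) (D 0 1 2 6 9) false _ h_12569).
    apply: (eqpos _ (fac 1 2 6 9 5 0 isT)). rewrite (sw4 1 2 6 9 5) (sw3 1 2 6 5 9) (sw4 1 2 6 9 0) (sw3 1 2 6 0 9) (sw2 1 2 0 6 9) (sw1 1 0 2 6 9). rewrite /sg /=; ring.
  have h_12369 : 0 < sg false * D 1 2 3 6 9.
    apply: (@fstep _ (sg false * D 1 2 5 6 9) (D 1 2 3 6 9) false _ h_12569).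
    apply: (eqpos _ (fac 1 2 6 9 5 3 isT)). rewrite (sw4 1 2 6 9 5) (sw3 1 2 6 5 9) (sw4 1 2 6 9 3) (sw3 1 2 6 3 9). rewrite /sg /=; ring.
  have h_12469 : 0 < sg false * D 1 2 4 6 9.
    apply: (@fstep _ (sg false * D 1 2 5 6 9) (D 1 2 4 6 9) false _ h_12569).
    apply: (eqpos _ (fac 1 2 6 9 5 4 isT)). rewrite (sw4 1 2 6 9 5) (sw3 1 2 6 5 9) (sw4 1 2 6 9 4) (sw3 1 2 6 4 9). rewrite /sg /=; ring.
  have h_01356 : 0 < sg true * D 0 1 3 5 6.
    apply: (@fstep _ (sg false * D 1 2 3 5 6) (D 0 1 3 5 6) true _ h_12356).
    apply: (eqpos _ (fac 1 3 5 6 2 0 isT)). rewrite (sw4 1 3 5 6 2) (sw3 1 3 5 2 6) (sw2 1 3 2 5 6) (sw4 1 3 5 6 0) (sw3 1 3 5 0 6) (sw2 1 3 0 5 6) (sw1 1 0 3 5 6). rewrite /sg /=; ring.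
  have h_13456 : 0 < sg true * D 1 3 4 5 6.
    apply: (@fstep _ (sg false * D 1 2 3 5 6) (D 1 3 4 5 6) true _ h_12356).
    apply: (eqpos _ (fac 1 3 5 6 2 4 isT)). rewrite (sw4 1 3 5 6 2) (sw3 1 3 5 2 6) (sw2 1 3 2 5 6) (sw4 1 3 5 6 4) (sw3 1 3 5 4 6). rewrite /sg /=; ring.
  have h_13567 : 0 < sg true * D 1 3 5 6 7.
    apply: (@fstep _ (sg false * D 1 2 3 5 6) (D 1 3 5 6 7) true _ h_12356).
    apply: (eqpos _ (fac 1 3 5 6 2 7 isT)). rewrite (sw4 1 3 5 6 2) (sw3 1 3 5 2 6) (sw2 1 3 2 5 6). rewrite /sg /=; ring.
  have h_13568 : 0 < sg true * D 1 3 5 6 8.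
    apply: (@fstep _ (sg false * D 1 2 3 5 6) (D 1 3 5 6 8) true _ h_12356).
    apply: (eqpos _ (fac 1 3 5 6 2 8 isT)). rewrite (sw4 1 3 5 6 2) (sw3 1 3 5 2 6) (sw2 1 3 2 5 6). rewrite /sg /=; ring.
  have h_13569 : 0 < sg true * D 1 3 5 6 9.
    apply: (@fstep _ (sg false * D 1 2 3 5 6) (D 1 3 5 6 9) true _ h_12356).
    apply: (eqpos _ (fac 1 3 5 6 2 9 isT)). rewrite (sw4 1 3 5 6 2) (sw3 1 3 5 2 6) (sw2 1 3 2 5 6). rewrite /sg /=; ring.
  have h_13459 : 0 < sg false * D 1 3 4 5 9.
    apply: (@fstep _ (sg true * D 1 2 3 5 9) (D 1 3 4 5 9) false _ h_12359).
    apply: (eqpos _ (fac 1 3 5 9 2 4 isT)). rewrite (sw4 1 3 5 9 2) (sw3 1 3 5 2 9) (sw2 1 3 2 5 9) (sw4 1 3 5 9 4) (sw3 1 3 5 4 9). rewrite /sg /=; ring.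
  have h_13579 : 0 < sg true * D 1 3 5 7 9.
    apply: (@fstep _ (sg true * D 1 2 3 5 9) (D 1 3 5 7 9) true _ h_12359).
    apply: (eqpos _ (fac 1 3 5 9 2 7 isT)). rewrite (sw4 1 3 5 9 2) (sw3 1 3 5 2 9) (sw2 1 3 2 5 9) (sw4 1 3 5 9 7). rewrite /sg /=; ring.
  have h_02469 : 0 < sg false * D 0 2 4 6 9.
    apply: (@fstep _ (sg false * D 1 2 4 6 9) (D 0 2 4 6 9) false _ h_12469).
    apply: (eqpos _ (fac 2 4 6 9 1 0 isT)). rewrite (sw4 2 4 6 9 1) (sw3 2 4 6 1 9) (sw2 2 4 1 6 9) (sw1 2 1 4 6 9) (sw4 2 4 6 9 0) (sw3 2 4 6 0 9) (sw2 2 4 0 6 9) (sw1 2 0 4 6 9). rewrite /sg /=; ring.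
  have h_02578 : 0 < sg false * D 0 2 5 7 8.
    apply: (@gstep _ (sg false * D 0 2 4 5 7) (sg true * D 0 2 5 6 8) (sg true * D 0 2 4 5 8) (sg true * D 0 2 5 6 7) (sg true * D 0 2 4 5 6) (D 0 2 5 7 8) true false _ h_02457 h_02568 h_02458 h_02567 h_02456).
    apply: (etrans _ (gp 0 2 5 4 6 7 8)). rewrite (sw3 0 2 5 4 6) (sw3 0 2 5 4 7) (sw3 0 2 5 4 8). rewrite /sg /=; ring.
  have h_01246 : 0 < sg true * D 0 1 2 4 6.
    apply: (@gstep _ (sg false * D 0 1 2 5 6) (sg false * D 0 2 4 6 9) (sg false * D 0 1 2 6 9) (sg true * D 0 2 4 5 6) (sg true * D 0 2 5 6 9) (D 0 1 2 4 6) true true _ h_01256 h_02469 h_01269 h_02456 h_02569).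
    apply: (etrans _ (gp 0 2 6 1 4 5 9)). rewrite (sw3 0 2 6 1 4) (sw4 0 2 1 6 4) (sw2 0 2 1 4 6) (sw3 0 2 6 5 9) (sw3 0 2 6 1 5) (sw4 0 2 1 6 5) (sw2 0 2 1 5 6) (sw3 0 2 6 4 9) (sw3 0 2 6 1 9) (sw2 0 2 1 6 9) (sw3 0 2 6 4 5) (sw4 0 2 4 6 5). rewrite /sg /=; ring.
  have h_01268 : 0 < sg false * D 0 1 2 6 8.
    apply: (@gstep _ (sg true * D 0 1 2 4 6) (sg true * D 0 2 5 6 8) (sg false * D 0 1 2 5 6) (sg true * D 0 2 4 6 8) (sg true * D 0 2 4 5 6) (D 0 1 2 6 8) false true _ h_01246 h_02568 h_01256 h_02468 h_02456).
    apply: (etrans _ (gp 0 2 6 1 4 5 8)). rewrite (sw3 0 2 6 1 4) (sw4 0 2 1 6 4) (sw2 0 2 1 4 6) (sw3 0 2 6 5 8) (sw3 0 2 6 1 5) (sw4 0 2 1 6 5) (sw2 0 2 1 5 6) (sw3 0 2 6 4 8) (sw3 0 2 6 1 8) (sw2 0 2 1 6 8) (sw3 0 2 6 4 5) (sw4 0 2 4 6 5). rewrite /sg /=; ring.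
  have h_02678 : 0 < sg false * D 0 2 6 7 8.
    apply: (@gstep _ (sg false * D 0 2 4 6 7) (sg true * D 0 2 5 6 8) (sg true * D 0 2 4 6 8) (sg true * D 0 2 5 6 7) (sg true * D 0 2 4 5 6) (D 0 2 6 7 8) false true _ h_02467 h_02568 h_02468 h_02567 h_02456).
    apply: (etrans _ (gp 0 2 6 4 5 7 8)). rewrite (sw3 0 2 6 4 5) (sw4 0 2 4 6 5) (sw3 0 2 6 4 7) (sw3 0 2 6 5 8) (sw3 0 2 6 4 8) (sw3 0 2 6 5 7). rewrite /sg /=; ring.
  have h_02357 : 0 < sg false * D 0 2 3 5 7.
    apply: (@gstep _ (sg true * D 0 2 3 4 7) (sg false * D 0 2 5 7 8) (sg true * D 0 2 3 7 8) (sg false * D 0 2 4 5 7) (sg true * D 0 2 4 7 8) (D 0 2 3 5 7) false true _ h_02347 h_02578 h_02378 h_02457 h_02478).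
    apply: (etrans _ (gp 0 2 7 3 4 5 8)). rewrite (sw3 0 2 7 3 4) (sw4 0 2 3 7 4) (sw3 0 2 7 5 8) (sw3 0 2 7 3 5) (sw4 0 2 3 7 5) (sw3 0 2 7 4 8) (sw3 0 2 7 3 8) (sw3 0 2 7 4 5) (sw4 0 2 4 7 5). rewrite /sg /=; ring.
  have h_02379 : 0 < sg true * D 0 2 3 7 9.
    apply: (@gstep _ (sg true * D 0 2 3 4 7) (sg true * D 0 2 5 7 9) (sg false * D 0 2 3 5 7) (sg true * D 0 2 4 7 9) (sg false * D 0 2 4 5 7) (D 0 2 3 7 9) true true _ h_02347 h_02579 h_02357 h_02479 h_02457).
    apply: (etrans _ (gp 0 2 7 3 4 5 9)). rewrite (sw3 0 2 7 3 4) (sw4 0 2 3 7 4) (sw3 0 2 7 5 9) (sw3 0 2 7 3 5) (sw4 0 2 3 7 5) (sw3 0 2 7 4 9) (sw3 0 2 7 3 9) (sw3 0 2 7 4 5) (sw4 0 2 4 7 5). rewrite /sg /=; ring.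
  have h_02367 : 0 < sg false * D 0 2 3 6 7.
    apply: (@gstep _ (sg true * D 0 2 3 4 7) (sg false * D 0 2 6 7 8) (sg true * D 0 2 3 7 8) (sg false * D 0 2 4 6 7) (sg true * D 0 2 4 7 8) (D 0 2 3 6 7) false true _ h_02347 h_02678 h_02378 h_02467 h_02478).
    apply: (etrans _ (gp 0 2 7 3 4 6 8)). rewrite (sw3 0 2 7 3 4) (sw4 0 2 3 7 4) (sw3 0 2 7 6 8) (sw3 0 2 7 3 6) (sw4 0 2 3 7 6) (sw3 0 2 7 4 8) (sw3 0 2 7 3 8) (sw3 0 2 7 4 6) (sw4 0 2 4 7 6). rewrite /sg /=; ring.
  have h_02369 : 0 < sg false * D 0 2 3 6 9.
    apply: (@gstep _ (sg true * D 0 2 3 5 6) (sg true * D 0 2 3 7 9) (sg false * D 0 2 3 5 9) (sg false * D 0 2 3 6 7) (sg false * D 0 2 3 5 7) (D 0 2 3 6 9) false true _ h_02356 h_02379 h_02359 h_02367 h_02357).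
    apply: (etrans _ (gp 0 2 3 5 6 7 9)). rewrite /sg /=; ring.
  have h_01236 : 0 < sg true * D 0 1 2 3 6.
    apply: (@gstep _ (sg false * D 0 1 2 5 6) (sg false * D 0 2 3 6 9) (sg false * D 0 1 2 6 9) (sg true * D 0 2 3 5 6) (sg true * D 0 2 5 6 9) (D 0 1 2 3 6) true true _ h_01256 h_02369 h_01269 h_02356 h_02569).
    apply: (etrans _ (gp 0 2 6 1 3 5 9)). rewrite (sw3 0 2 6 1 3) (sw4 0 2 1 6 3) (sw2 0 2 1 3 6) (sw3 0 2 6 5 9) (sw3 0 2 6 1 5) (sw4 0 2 1 6 5) (sw2 0 2 1 5 6) (sw3 0 2 6 3 9) (sw3 0 2 6 1 9) (sw2 0 2 1 6 9) (sw3 0 2 6 3 5) (sw4 0 2 3 6 5). rewrite /sg /=; ring.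
  have h_02679 : 0 < sg true * D 0 2 6 7 9.
    apply: (@gstep _ (sg false * D 0 2 3 6 7) (sg true * D 0 2 5 7 9) (sg true * D 0 2 3 7 9) (sg true * D 0 2 5 6 7) (sg false * D 0 2 3 5 7) (D 0 2 6 7 9) true true _ h_02367 h_02579 h_02379 h_02567 h_02357).
    apply: (etrans _ (gp 0 2 7 3 5 6 9)). rewrite (sw3 0 2 7 3 5) (sw4 0 2 3 7 5) (sw3 0 2 7 6 9) (sw3 0 2 7 3 6) (sw4 0 2 3 7 6) (sw3 0 2 7 5 9) (sw3 0 2 7 3 9) (sw3 0 2 7 5 6) (sw4 0 2 5 7 6). rewrite /sg /=; ring.
  have h_01267 : 0 < sg false * D 0 1 2 6 7.
    apply: (@gstep _ (sg true * D 0 1 2 3 6) (sg true * D 0 2 6 7 9) (sg false * D 0 1 2 6 9) (sg false * D 0 2 3 6 7) (sg false * D 0 2 3 6 9) (D 0 1 2 6 7) true false _ h_01236 h_02679 h_01269 h_02367 h_02369).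
    apply: (etrans _ (gp 0 2 6 1 3 7 9)). rewrite (sw3 0 2 6 1 3) (sw4 0 2 1 6 3) (sw2 0 2 1 3 6) (sw3 0 2 6 1 7) (sw2 0 2 1 6 7) (sw3 0 2 6 3 9) (sw3 0 2 6 1 9) (sw2 0 2 1 6 9) (sw3 0 2 6 3 7). rewrite /sg /=; ring.
  have h_01278 : 0 < sg true * D 0 1 2 7 8.
    apply: (@gstep _ (sg false * D 0 1 2 4 7) (sg false * D 0 1 2 6 8) (sg true * D 0 1 2 4 8) (sg false * D 0 1 2 6 7) (sg true * D 0 1 2 4 6) (D 0 1 2 7 8) true true _ h_01247 h_01268 h_01248 h_01267 h_01246).
    apply: (etrans _ (gp 0 1 2 4 6 7 8)). rewrite /sg /=; ring.
  have h_01237 : 0 < sg false * D 0 1 2 3 7.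
    apply: (@gstep _ (sg false * D 0 1 2 4 7) (sg false * D 0 2 3 6 7) (sg false * D 0 1 2 6 7) (sg true * D 0 2 3 4 7) (sg false * D 0 2 4 6 7) (D 0 1 2 3 7) false true _ h_01247 h_02367 h_01267 h_02347 h_02467).
    apply: (etrans _ (gp 0 2 7 1 3 4 6)). rewrite (sw3 0 2 7 1 3) (sw4 0 2 1 7 3) (sw2 0 2 1 3 7) (sw3 0 2 7 4 6) (sw4 0 2 4 7 6) (sw3 0 2 7 1 4) (sw4 0 2 1 7 4) (sw2 0 2 1 4 7) (sw3 0 2 7 3 6) (sw4 0 2 3 7 6) (sw3 0 2 7 1 6) (sw4 0 2 1 7 6) (sw2 0 2 1 6 7) (sw3 0 2 7 3 4) (sw4 0 2 3 7 4). rewrite /sg /=; ring.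
  have h_01478 : 0 < sg true * D 0 1 4 7 8.
    apply: (@gstep _ (sg false * D 0 1 2 4 7) (sg true * D 0 1 3 7 8) (sg true * D 0 1 2 7 8) (sg true * D 0 1 3 4 7) (sg false * D 0 1 2 3 7) (D 0 1 4 7 8) true true _ h_01247 h_01378 h_01278 h_01347 h_01237).
    apply: (etrans _ (gp 0 1 7 2 3 4 8)). rewrite (sw3 0 1 7 2 3) (sw4 0 1 2 7 3) (sw3 0 1 7 4 8) (sw3 0 1 7 2 4) (sw4 0 1 2 7 4) (sw3 0 1 7 3 8) (sw3 0 1 7 2 8) (sw3 0 1 7 3 4) (sw4 0 1 3 7 4). rewrite /sg /=; ring.
  have h_01238 : 0 < sg true * D 0 1 2 3 8.
    apply: (@gstep _ (sg true * D 0 1 2 4 8) (sg true * D 0 1 3 7 8) (sg true * D 0 1 2 7 8) (sg false * D 0 1 3 4 8) (sg true * D 0 1 4 7 8) (D 0 1 2 3 8) true true _ h_01248 h_01378 h_01278 h_01348 h_01478).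
    apply: (etrans _ (gp 0 1 8 2 3 4 7)). rewrite (sw3 0 1 8 2 3) (sw4 0 1 2 8 3) (sw3 0 1 8 4 7) (sw4 0 1 4 8 7) (sw3 0 1 8 2 4) (sw4 0 1 2 8 4) (sw3 0 1 8 3 7) (sw4 0 1 3 8 7) (sw3 0 1 8 2 7) (sw4 0 1 2 8 7) (sw3 0 1 8 3 4) (sw4 0 1 3 8 4). rewrite /sg /=; ring.
  have h_01239 : 0 < sg false * D 0 1 2 3 9.
    apply: (@gstep _ (sg true * D 0 1 2 5 9) (sg false * D 0 2 3 6 9) (sg false * D 0 1 2 6 9) (sg false * D 0 2 3 5 9) (sg true * D 0 2 5 6 9) (D 0 1 2 3 9) true false _ h_01259 h_02369 h_01269 h_02359 h_02569).
    apply: (etrans _ (gp 0 2 9 1 3 5 6)). rewrite (sw3 0 2 9 1 3) (sw4 0 2 1 9 3) (sw2 0 2 1 3 9) (sw3 0 2 9 5 6) (sw4 0 2 5 9 6) (sw3 0 2 9 1 5) (sw4 0 2 1 9 5) (sw2 0 2 1 5 9) (sw3 0 2 9 3 6) (sw4 0 2 3 9 6) (sw3 0 2 9 1 6) (sw4 0 2 1 9 6) (sw2 0 2 1 6 9) (sw3 0 2 9 3 5) (sw4 0 2 3 9 5). rewrite /sg /=; ring.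
  have h_13469 : 0 < sg false * D 1 3 4 6 9.
    apply: (@gstep _ (sg true * D 1 3 4 5 6) (sg true * D 1 3 4 7 9) (sg false * D 1 3 4 5 9) (sg false * D 1 3 4 6 7) (sg false * D 1 3 4 5 7) (D 1 3 4 6 9) false true _ h_13456 h_13479 h_13459 h_13467 h_13457).
    apply: (etrans _ (gp 1 3 4 5 6 7 9)). rewrite /sg /=; ring.
  have h_01369 : 0 < sg true * D 0 1 3 6 9.
    apply: (@gstep _ (sg true * D 0 1 2 3 6) (sg true * D 1 3 5 6 9) (sg true * D 0 1 3 5 6) (sg false * D 1 2 3 6 9) (sg false * D 1 2 3 5 6) (D 0 1 3 6 9) false false _ h_01236 h_13569 h_01356 h_12369 h_12356).
    apply: (etrans _ (gp 1 3 6 0 2 5 9)). rewrite (sw3 1 3 6 0 2) (sw4 1 3 0 6 2) (sw2 1 3 0 2 6) (sw3 1 0 3 2 6) (sw1 1 0 2 3 6) (sw3 1 3 6 5 9) (sw3 1 3 6 0 5) (sw4 1 3 0 6 5) (sw2 1 3 0 5 6) (sw1 1 0 3 5 6) (sw3 1 3 6 2 9) (sw2 1 3 2 6 9) (sw3 1 3 6 0 9) (sw2 1 3 0 6 9) (sw1 1 0 3 6 9) (sw3 1 3 6 2 5) (sw4 1 3 2 6 5) (sw2 1 3 2 5 6). rewrite /sg /=; ring.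
  have h_01346 : 0 < sg false * D 0 1 3 4 6.
    apply: (@gstep _ (sg true * D 0 1 3 5 6) (sg false * D 1 3 4 6 9) (sg true * D 0 1 3 6 9) (sg true * D 1 3 4 5 6) (sg true * D 1 3 5 6 9) (D 0 1 3 4 6) true false _ h_01356 h_13469 h_01369 h_13456 h_13569).
    apply: (etrans _ (gp 1 3 6 0 4 5 9)). rewrite (sw3 1 3 6 0 4) (sw4 1 3 0 6 4) (sw2 1 3 0 4 6) (sw1 1 0 3 4 6) (sw3 1 3 6 5 9) (sw3 1 3 6 0 5) (sw4 1 3 0 6 5) (sw2 1 3 0 5 6) (sw1 1 0 3 5 6) (sw3 1 3 6 4 9) (sw3 1 3 6 0 9) (sw2 1 3 0 6 9) (sw1 1 0 3 6 9) (sw3 1 3 6 4 5) (sw4 1 3 4 6 5). rewrite /sg /=; ring.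
  have h_01368 : 0 < sg true * D 0 1 3 6 8.
    apply: (@gstep _ (sg false * D 0 1 3 4 6) (sg true * D 1 3 5 6 8) (sg true * D 0 1 3 5 6) (sg true * D 1 3 4 6 8) (sg true * D 1 3 4 5 6) (D 0 1 3 6 8) false false _ h_01346 h_13568 h_01356 h_13468 h_13456).
    apply: (etrans _ (gp 1 3 6 0 4 5 8)). rewrite (sw3 1 3 6 0 4) (sw4 1 3 0 6 4) (sw2 1 3 0 4 6) (sw1 1 0 3 4 6) (sw3 1 3 6 5 8) (sw3 1 3 6 0 5) (sw4 1 3 0 6 5) (sw2 1 3 0 5 6) (sw1 1 0 3 5 6) (sw3 1 3 6 4 8) (sw3 1 3 6 0 8) (sw2 1 3 0 6 8) (sw1 1 0 3 6 8) (sw3 1 3 6 4 5) (sw4 1 3 4 6 5). rewrite /sg /=; ring.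
  have h_01367 : 0 < sg false * D 0 1 3 6 7.
    apply: (@gstep _ (sg true * D 0 1 2 3 6) (sg true * D 0 1 3 7 8) (sg false * D 0 1 2 3 7) (sg true * D 0 1 3 6 8) (sg true * D 0 1 2 3 8) (D 0 1 3 6 7) true false _ h_01236 h_01378 h_01237 h_01368 h_01238).
    apply: (etrans _ (gp 0 1 3 2 6 7 8)). rewrite (sw3 0 1 3 2 6) (sw3 0 1 3 2 7) (sw3 0 1 3 2 8). rewrite /sg /=; ring.
  have h_01379 : 0 < sg false * D 0 1 3 7 9.
    apply: (@gstep _ (sg false * D 0 1 2 3 7) (sg true * D 0 1 3 6 9) (sg false * D 0 1 2 3 9) (sg false * D 0 1 3 6 7) (sg true * D 0 1 2 3 6) (D 0 1 3 7 9) true false _ h_01237 h_01369 h_01239 h_01367 h_01236).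
    apply: (etrans _ (gp 0 1 3 2 6 7 9)). rewrite (sw3 0 1 3 2 6) (sw3 0 1 3 2 7) (sw3 0 1 3 2 9). rewrite /sg /=; ring.
  have h_01357 : 0 < sg false * D 0 1 3 5 7.
    apply: (@gstep _ (sg true * D 0 1 3 4 7) (sg true * D 1 3 5 6 7) (sg false * D 0 1 3 6 7) (sg false * D 1 3 4 5 7) (sg false * D 1 3 4 6 7) (D 0 1 3 5 7) false true _ h_01347 h_13567 h_01367 h_13457 h_13467).
    apply: (etrans _ (gp 1 3 7 0 4 5 6)). rewrite (sw3 1 3 7 0 4) (sw4 1 3 0 7 4) (sw2 1 3 0 4 7) (sw1 1 0 3 4 7) (sw3 1 3 7 5 6) (sw4 1 3 5 7 6) (sw3 1 3 7 0 5) (sw4 1 3 0 7 5) (sw2 1 3 0 5 7) (sw1 1 0 3 5 7) (sw3 1 3 7 4 6) (sw4 1 3 4 7 6) (sw3 1 3 7 0 6) (sw4 1 3 0 7 6) (sw2 1 3 0 6 7) (sw1 1 0 3 6 7) (sw3 1 3 7 4 5) (sw4 1 3 4 7 5). rewrite /sg /=; ring.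
  apply: (@gfalse _ (sg true * D 0 1 3 4 7) (sg true * D 1 3 5 7 9) (sg false * D 0 1 3 5 7) (sg true * D 1 3 4 7 9) (sg false * D 0 1 3 7 9) (sg false * D 1 3 4 5 7) true _ h_01347 h_13579 h_01357 h_13479 h_01379 h_13457).
  apply: (etrans _ (gp 1 3 7 0 4 5 9)). rewrite (sw3 1 3 7 0 4) (sw4 1 3 0 7 4) (sw2 1 3 0 4 7) (sw1 1 0 3 4 7) (sw3 1 3 7 5 9) (sw3 1 3 7 0 5) (sw4 1 3 0 7 5) (sw2 1 3 0 5 7) (sw1 1 0 3 5 7) (sw3 1 3 7 4 9) (sw3 1 3 7 0 9) (sw2 1 3 0 7 9) (sw1 1 0 3 7 9) (sw3 1 3 7 4 5) (sw4 1 3 4 7 5). rewrite /sg /=; ring.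
  have h_02347 : 0 < sg true * D 0 2 3 4 7.
    apply: (@fstep _ (sg false * D 0 1 2 4 7) (D 0 2 3 4 7) true _ h_01247).
    apply: (eqpos _ (fac 0 2 4 7 1 3 isT)). rewrite (sw4 0 2 4 7 1) (sw3 0 2 4 1 7) (sw2 0 2 1 4 7) (sw4 0 2 4 7 3) (sw3 0 2 4 3 7). rewrite /sg /=; ring.
  have h_02457 : 0 < sg false * D 0 2 4 5 7.
    apply: (@fstep _ (sg false * D 0 1 2 4 7) (D 0 2 4 5 7) false _ h_01247).
    apply: (eqpos _ (fac 0 2 4 7 1 5 isT)). rewrite (sw4 0 2 4 7 1) (sw3 0 2 4 1 7) (sw2 0 2 1 4 7) (sw4 0 2 4 7 5). rewrite /sg /=; ring.
  have h_02467 : 0 < sg false * D 0 2 4 6 7.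
    apply: (@fstep _ (sg false * D 0 1 2 4 7) (D 0 2 4 6 7) false _ h_01247).
    apply: (eqpos _ (fac 0 2 4 7 1 6 isT)). rewrite (sw4 0 2 4 7 1) (sw3 0 2 4 1 7) (sw2 0 2 1 4 7) (sw4 0 2 4 7 6). rewrite /sg /=; ring.
  have h_02478 : 0 < sg true * D 0 2 4 7 8.
    apply: (@fstep _ (sg false * D 0 1 2 4 7) (D 0 2 4 7 8) true _ h_01247).
    apply: (eqpos _ (fac 0 2 4 7 1 8 isT)). rewrite (sw4 0 2 4 7 1) (sw3 0 2 4 1 7) (sw2 0 2 1 4 7). rewrite /sg /=; ring.
  have h_01248 : 0 < sg true * D 0 1 2 4 8.
    apply: (@fstep _ (sg true * D 0 2 4 7 8) (D 0 1 2 4 8) true _ h_02478).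
    apply: (eqpos _ (fac 0 2 4 8 7 1 isT)). rewrite (sw4 0 2 4 8 7) (sw4 0 2 4 8 1) (sw3 0 2 4 1 8) (sw2 0 2 1 4 8). rewrite /sg /=; ring.
  have h_02348 : 0 < sg false * D 0 2 3 4 8.
    apply: (@fstep _ (sg true * D 0 2 4 7 8) (D 0 2 3 4 8) false _ h_02478).
    apply: (eqpos _ (fac 0 2 4 8 7 3 isT)). rewrite (sw4 0 2 4 8 7) (sw4 0 2 4 8 3) (sw3 0 2 4 3 8). rewrite /sg /=; ring.
  have h_02458 : 0 < sg true * D 0 2 4 5 8.
    apply: (@fstep _ (sg true * D 0 2 4 7 8) (D 0 2 4 5 8) true _ h_02478).
    apply: (eqpos _ (fac 0 2 4 8 7 5 isT)). rewrite (sw4 0 2 4 8 7) (sw4 0 2 4 8 5). rewrite /sg /=; ring.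
  have h_02489 : 0 < sg false * D 0 2 4 8 9.
    apply: (@fstep _ (sg true * D 0 2 4 7 8) (D 0 2 4 8 9) false _ h_02478).
    apply: (eqpos _ (fac 0 2 4 8 7 9 isT)). rewrite (sw4 0 2 4 8 7). rewrite /sg /=; ring.
  have h_01347 : 0 < sg true * D 0 1 3 4 7.
    apply: (@fstep _ (sg true * D 0 2 3 4 7) (D 0 1 3 4 7) true _ h_02347).
    apply: (eqpos _ (fac 0 3 4 7 2 1 isT)). rewrite (sw4 0 3 4 7 2) (sw3 0 3 4 2 7) (sw2 0 3 2 4 7) (sw4 0 3 4 7 1) (sw3 0 3 4 1 7) (sw2 0 3 1 4 7). rewrite /sg /=; ring.
  have h_03478 : 0 < sg false * D 0 3 4 7 8.
    apply: (@fstep _ (sg true * D 0 2 3 4 7) (D 0 3 4 7 8) false _ h_02347).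
    apply: (eqpos _ (fac 0 3 4 7 2 8 isT)). rewrite (sw4 0 3 4 7 2) (sw3 0 3 4 2 7) (sw2 0 3 2 4 7). rewrite /sg /=; ring.
  have h_01348 : 0 < sg false * D 0 1 3 4 8.
    apply: (@fstep _ (sg false * D 0 2 3 4 8) (D 0 1 3 4 8) false _ h_02348).
    apply: (eqpos _ (fac 0 3 4 8 2 1 isT)). rewrite (sw4 0 3 4 8 2) (sw3 0 3 4 2 8) (sw2 0 3 2 4 8) (sw4 0 3 4 8 1) (sw3 0 3 4 1 8) (sw2 0 3 1 4 8). rewrite /sg /=; ring.
  have h_01378 : 0 < sg true * D 0 1 3 7 8.
    apply: (@fstep _ (sg false * D 0 3 4 7 8) (D 0 1 3 7 8) true _ h_03478).
    apply: (eqpos _ (fac 0 3 7 8 4 1 isT)). rewrite (sw4 0 3 7 8 4) (sw3 0 3 7 4 8) (sw4 0 3 7 8 1) (sw3 0 3 7 1 8) (sw2 0 3 1 7 8). rewrite /sg /=; ring.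
  have h_02378 : 0 < sg true * D 0 2 3 7 8.
    apply: (@fstep _ (sg false * D 0 3 4 7 8) (D 0 2 3 7 8) true _ h_03478).
    apply: (eqpos _ (fac 0 3 7 8 4 2 isT)). rewrite (sw4 0 3 7 8 4) (sw3 0 3 7 4 8) (sw4 0 3 7 8 2) (sw3 0 3 7 2 8) (sw2 0 3 2 7 8). rewrite /sg /=; ring.
  have h_13457 : 0 < sg false * D 1 3 4 5 7.
    apply: (@fstep _ (sg true * D 0 1 3 4 7) (D 1 3 4 5 7) false _ h_01347).
    apply: (eqpos _ (fac 1 3 4 7 0 5 isT)). rewrite (sw4 1 3 4 7 0) (sw3 1 3 4 0 7) (sw2 1 3 0 4 7) (sw1 1 0 3 4 7) (sw4 1 3 4 7 5). rewrite /sg /=; ring.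
  have h_13467 : 0 < sg false * D 1 3 4 6 7.
    apply: (@fstep _ (sg true * D 0 1 3 4 7) (D 1 3 4 6 7) false _ h_01347).
    apply: (eqpos _ (fac 1 3 4 7 0 6 isT)). rewrite (sw4 1 3 4 7 0) (sw3 1 3 4 0 7) (sw2 1 3 0 4 7) (sw1 1 0 3 4 7) (sw4 1 3 4 7 6). rewrite /sg /=; ring.
  have h_13479 : 0 < sg true * D 1 3 4 7 9.
    apply: (@fstep _ (sg true * D 0 1 3 4 7) (D 1 3 4 7 9) true _ h_01347).
    apply: (eqpos _ (fac 1 3 4 7 0 9 isT)). rewrite (sw4 1 3 4 7 0) (sw3 1 3 4 0 7) (sw2 1 3 0 4 7) (sw1 1 0 3 4 7). rewrite /sg /=; ring.
  have h_13458 : 0 < sg true * D 1 3 4 5 8.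
    apply: (@fstep _ (sg false * D 0 1 3 4 8) (D 1 3 4 5 8) true _ h_01348).
    apply: (eqpos _ (fac 1 3 4 8 0 5 isT)). rewrite (sw4 1 3 4 8 0) (sw3 1 3 4 0 8) (sw2 1 3 0 4 8) (sw1 1 0 3 4 8) (sw4 1 3 4 8 5). rewrite /sg /=; ring.
  have h_13468 : 0 < sg true * D 1 3 4 6 8.
    apply: (@fstep _ (sg false * D 0 1 3 4 8) (D 1 3 4 6 8) true _ h_01348).
    apply: (eqpos _ (fac 1 3 4 8 0 6 isT)). rewrite (sw4 1 3 4 8 0) (sw3 1 3 4 0 8) (sw2 1 3 0 4 8) (sw1 1 0 3 4 8) (sw4 1 3 4 8 6). rewrite /sg /=; ring.
  have h_13489 : 0 < sg false * D 1 3 4 8 9.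
    apply: (@fstep _ (sg false * D 0 1 3 4 8) (D 1 3 4 8 9) false _ h_01348).
    apply: (eqpos _ (fac 1 3 4 8 0 9 isT)). rewrite (sw4 1 3 4 8 0) (sw3 1 3 4 0 8) (sw2 1 3 0 4 8) (sw1 1 0 3 4 8). rewrite /sg /=; ring.
  have h_02356 : 0 < sg false * D 0 2 3 5 6.
    apply: (@fstep _ (sg true * D 0 1 2 5 6) (D 0 2 3 5 6) false _ h_01256).
    apply: (eqpos _ (fac 0 2 5 6 1 3 isT)). rewrite (sw4 0 2 5 6 1) (sw3 0 2 5 1 6) (sw2 0 2 1 5 6) (sw4 0 2 5 6 3) (sw3 0 2 5 3 6). rewrite /sg /=; ring.
  have h_02456 : 0 < sg false * D 0 2 4 5 6.
    apply: (@fstep _ (sg true * D 0 1 2 5 6) (D 0 2 4 5 6) false _ h_01256).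
    apply: (eqpos _ (fac 0 2 5 6 1 4 isT)). rewrite (sw4 0 2 5 6 1) (sw3 0 2 5 1 6) (sw2 0 2 1 5 6) (sw4 0 2 5 6 4) (sw3 0 2 5 4 6). rewrite /sg /=; ring.
  have h_02567 : 0 < sg false * D 0 2 5 6 7.
    apply: (@fstep _ (sg true * D 0 1 2 5 6) (D 0 2 5 6 7) false _ h_01256).
    apply: (eqpos _ (fac 0 2 5 6 1 7 isT)). rewrite (sw4 0 2 5 6 1) (sw3 0 2 5 1 6) (sw2 0 2 1 5 6). rewrite /sg /=; ring.
  have h_02568 : 0 < sg false * D 0 2 5 6 8.
    apply: (@fstep _ (sg true * D 0 1 2 5 6) (D 0 2 5 6 8) false _ h_01256).
    apply: (eqpos _ (fac 0 2 5 6 1 8 isT)). rewrite (sw4 0 2 5 6 1) (sw3 0 2 5 1 6) (sw2 0 2 1 5 6). rewrite /sg /=; ring.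
  have h_02569 : 0 < sg false * D 0 2 5 6 9.
    apply: (@fstep _ (sg true * D 0 1 2 5 6) (D 0 2 5 6 9) false _ h_01256).
    apply: (eqpos _ (fac 0 2 5 6 1 9 isT)). rewrite (sw4 0 2 5 6 1) (sw3 0 2 5 1 6) (sw2 0 2 1 5 6). rewrite /sg /=; ring.
  have h_01259 : 0 < sg false * D 0 1 2 5 9.
    apply: (@fstep _ (sg false * D 0 2 5 6 9) (D 0 1 2 5 9) false _ h_02569).
    apply: (eqpos _ (fac 0 2 5 9 6 1 isT)). rewrite (sw4 0 2 5 9 6) (sw4 0 2 5 9 1) (sw3 0 2 5 1 9) (sw2 0 2 1 5 9). rewrite /sg /=; ring.
  have h_02359 : 0 < sg true * D 0 2 3 5 9.
    apply: (@fstep _ (sg false * D 0 2 5 6 9) (D 0 2 3 5 9) true _ h_02569).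
    apply: (eqpos _ (fac 0 2 5 9 6 3 isT)). rewrite (sw4 0 2 5 9 6) (sw4 0 2 5 9 3) (sw3 0 2 5 3 9). rewrite /sg /=; ring.
  have h_02589 : 0 < sg false * D 0 2 5 8 9.
    apply: (@fstep _ (sg false * D 0 2 5 6 9) (D 0 2 5 8 9) false _ h_02569).
    apply: (eqpos _ (fac 0 2 5 9 6 8 isT)). rewrite (sw4 0 2 5 9 6) (sw4 0 2 5 9 8). rewrite /sg /=; ring.
  have h_12356 : 0 < sg true * D 1 2 3 5 6.
    apply: (@fstep _ (sg true * D 0 1 2 5 6) (D 1 2 3 5 6) true _ h_01256).
    apply: (eqpos _ (fac 1 2 5 6 0 3 isT)). rewrite (sw4 1 2 5 6 0) (sw3 1 2 5 0 6) (sw2 1 2 0 5 6) (sw1 1 0 2 5 6) (sw4 1 2 5 6 3) (sw3 1 2 5 3 6). rewrite /sg /=; ring.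
  have h_12569 : 0 < sg true * D 1 2 5 6 9.
    apply: (@fstep _ (sg true * D 0 1 2 5 6) (D 1 2 5 6 9) true _ h_01256).
    apply: (eqpos _ (fac 1 2 5 6 0 9 isT)). rewrite (sw4 1 2 5 6 0) (sw3 1 2 5 0 6) (sw2 1 2 0 5 6) (sw1 1 0 2 5 6). rewrite /sg /=; ring.
  have h_12359 : 0 < sg false * D 1 2 3 5 9.
    apply: (@fstep _ (sg false * D 0 1 2 5 9) (D 1 2 3 5 9) false _ h_01259).
    apply: (eqpos _ (fac 1 2 5 9 0 3 isT)). rewrite (sw4 1 2 5 9 0) (sw3 1 2 5 0 9) (sw2 1 2 0 5 9) (sw1 1 0 2 5 9) (sw4 1 2 5 9 3) (sw3 1 2 5 3 9). rewrite /sg /=; ring.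
  have h_01269 : 0 < sg true * D 0 1 2 6 9.
    apply: (@fstep _ (sg true * D 1 2 5 6 9) (D 0 1 2 6 9) true _ h_12569).
    apply: (eqpos _ (fac 1 2 6 9 5 0 isT)). rewrite (sw4 1 2 6 9 5) (sw3 1 2 6 5 9) (sw4 1 2 6 9 0) (sw3 1 2 6 0 9) (sw2 1 2 0 6 9) (sw1 1 0 2 6 9). rewrite /sg /=; ring.
  have h_12369 : 0 < sg true * D 1 2 3 6 9.
    apply: (@fstep _ (sg true * D 1 2 5 6 9) (D 1 2 3 6 9) true _ h_12569).
    apply: (eqpos _ (fac 1 2 6 9 5 3 isT)). rewrite (sw4 1 2 6 9 5) (sw3 1 2 6 5 9) (sw4 1 2 6 9 3) (sw3 1 2 6 3 9). rewrite /sg /=; ring.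
  have h_12469 : 0 < sg true * D 1 2 4 6 9.
    apply: (@fstep _ (sg true * D 1 2 5 6 9) (D 1 2 4 6 9) true _ h_12569).
    apply: (eqpos _ (fac 1 2 6 9 5 4 isT)). rewrite (sw4 1 2 6 9 5) (sw3 1 2 6 5 9) (sw4 1 2 6 9 4) (sw3 1 2 6 4 9). rewrite /sg /=; ring.
  have h_01356 : 0 < sg false * D 0 1 3 5 6.
    apply: (@fstep _ (sg true * D 1 2 3 5 6) (D 0 1 3 5 6) false _ h_12356).
    apply: (eqpos _ (fac 1 3 5 6 2 0 isT)). rewrite (sw4 1 3 5 6 2) (sw3 1 3 5 2 6) (sw2 1 3 2 5 6) (sw4 1 3 5 6 0) (sw3 1 3 5 0 6) (sw2 1 3 0 5 6) (sw1 1 0 3 5 6). rewrite /sg /=; ring.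
  have h_13456 : 0 < sg false * D 1 3 4 5 6.
    apply: (@fstep _ (sg true * D 1 2 3 5 6) (D 1 3 4 5 6) false _ h_12356).
    apply: (eqpos _ (fac 1 3 5 6 2 4 isT)). rewrite (sw4 1 3 5 6 2) (sw3 1 3 5 2 6) (sw2 1 3 2 5 6) (sw4 1 3 5 6 4) (sw3 1 3 5 4 6). rewrite /sg /=; ring.
  have h_13567 : 0 < sg false * D 1 3 5 6 7.
    apply: (@fstep _ (sg true * D 1 2 3 5 6) (D 1 3 5 6 7) false _ h_12356).
    apply: (eqpos _ (fac 1 3 5 6 2 7 isT)). rewrite (sw4 1 3 5 6 2) (sw3 1 3 5 2 6) (sw2 1 3 2 5 6). rewrite /sg /=; ring.
  have h_13568 : 0 < sg false * D 1 3 5 6 8.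
    apply: (@fstep _ (sg true * D 1 2 3 5 6) (D 1 3 5 6 8) false _ h_12356).
    apply: (eqpos _ (fac 1 3 5 6 2 8 isT)). rewrite (sw4 1 3 5 6 2) (sw3 1 3 5 2 6) (sw2 1 3 2 5 6). rewrite /sg /=; ring.
  have h_13569 : 0 < sg false * D 1 3 5 6 9.
    apply: (@fstep _ (sg true * D 1 2 3 5 6) (D 1 3 5 6 9) false _ h_12356).
    apply: (eqpos _ (fac 1 3 5 6 2 9 isT)). rewrite (sw4 1 3 5 6 2) (sw3 1 3 5 2 6) (sw2 1 3 2 5 6). rewrite /sg /=; ring.
  have h_13459 : 0 < sg true * D 1 3 4 5 9.
    apply: (@fstep _ (sg false * D 1 2 3 5 9) (D 1 3 4 5 9) true _ h_12359).
    apply: (eqpos _ (fac 1 3 5 9 2 4 isT)). rewrite (sw4 1 3 5 9 2) (sw3 1 3 5 2 9) (sw2 1 3 2 5 9) (sw4 1 3 5 9 4) (sw3 1 3 5 4 9). rewrite /sg /=; ring.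
  have h_13589 : 0 < sg false * D 1 3 5 8 9.
    apply: (@fstep _ (sg false * D 1 2 3 5 9) (D 1 3 5 8 9) false _ h_12359).
    apply: (eqpos _ (fac 1 3 5 9 2 8 isT)). rewrite (sw4 1 3 5 9 2) (sw3 1 3 5 2 9) (sw2 1 3 2 5 9) (sw4 1 3 5 9 8). rewrite /sg /=; ring.
  have h_02469 : 0 < sg true * D 0 2 4 6 9.
    apply: (@fstep _ (sg true * D 1 2 4 6 9) (D 0 2 4 6 9) true _ h_12469).
    apply: (eqpos _ (fac 2 4 6 9 1 0 isT)). rewrite (sw4 2 4 6 9 1) (sw3 2 4 6 1 9) (sw2 2 4 1 6 9) (sw1 2 1 4 6 9) (sw4 2 4 6 9 0) (sw3 2 4 6 0 9) (sw2 2 4 0 6 9) (sw1 2 0 4 6 9). rewrite /sg /=; ring.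
  have h_02578 : 0 < sg false * D 0 2 5 7 8.
    apply: (@gstep _ (sg false * D 0 2 4 5 7) (sg false * D 0 2 5 6 8) (sg true * D 0 2 4 5 8) (sg false * D 0 2 5 6 7) (sg false * D 0 2 4 5 6) (D 0 2 5 7 8) false true _ h_02457 h_02568 h_02458 h_02567 h_02456).
    apply: (etrans _ (gp 0 2 5 4 6 7 8)). rewrite (sw3 0 2 5 4 6) (sw3 0 2 5 4 7) (sw3 0 2 5 4 8). rewrite /sg /=; ring.
  have h_01246 : 0 < sg false * D 0 1 2 4 6.
    apply: (@gstep _ (sg true * D 0 1 2 5 6) (sg true * D 0 2 4 6 9) (sg true * D 0 1 2 6 9) (sg false * D 0 2 4 5 6) (sg false * D 0 2 5 6 9) (D 0 1 2 4 6) true false _ h_01256 h_02469 h_01269 h_02456 h_02569).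
    apply: (etrans _ (gp 0 2 6 1 4 5 9)). rewrite (sw3 0 2 6 1 4) (sw4 0 2 1 6 4) (sw2 0 2 1 4 6) (sw3 0 2 6 5 9) (sw3 0 2 6 1 5) (sw4 0 2 1 6 5) (sw2 0 2 1 5 6) (sw3 0 2 6 4 9) (sw3 0 2 6 1 9) (sw2 0 2 1 6 9) (sw3 0 2 6 4 5) (sw4 0 2 4 6 5). rewrite /sg /=; ring.
  have h_01267 : 0 < sg true * D 0 1 2 6 7.
    apply: (@gstep _ (sg false * D 0 1 2 4 6) (sg false * D 0 2 5 6 7) (sg true * D 0 1 2 5 6) (sg false * D 0 2 4 6 7) (sg false * D 0 2 4 5 6) (D 0 1 2 6 7) false false _ h_01246 h_02567 h_01256 h_02467 h_02456).
    apply: (etrans _ (gp 0 2 6 1 4 5 7)). rewrite (sw3 0 2 6 1 4) (sw4 0 2 1 6 4) (sw2 0 2 1 4 6) (sw3 0 2 6 5 7) (sw3 0 2 6 1 5) (sw4 0 2 1 6 5) (sw2 0 2 1 5 6) (sw3 0 2 6 4 7) (sw3 0 2 6 1 7) (sw2 0 2 1 6 7) (sw3 0 2 6 4 5) (sw4 0 2 4 6 5). rewrite /sg /=; ring.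
  have h_02357 : 0 < sg false * D 0 2 3 5 7.
    apply: (@gstep _ (sg true * D 0 2 3 4 7) (sg false * D 0 2 5 7 8) (sg true * D 0 2 3 7 8) (sg false * D 0 2 4 5 7) (sg true * D 0 2 4 7 8) (D 0 2 3 5 7) false true _ h_02347 h_02578 h_02378 h_02457 h_02478).
    apply: (etrans _ (gp 0 2 7 3 4 5 8)). rewrite (sw3 0 2 7 3 4) (sw4 0 2 3 7 4) (sw3 0 2 7 5 8) (sw3 0 2 7 3 5) (sw4 0 2 3 7 5) (sw3 0 2 7 4 8) (sw3 0 2 7 3 8) (sw3 0 2 7 4 5) (sw4 0 2 4 7 5). rewrite /sg /=; ring.
  have h_02367 : 0 < sg false * D 0 2 3 6 7.
    apply: (@gstep _ (sg true * D 0 2 3 4 7) (sg false * D 0 2 5 6 7) (sg false * D 0 2 3 5 7) (sg false * D 0 2 4 6 7) (sg false * D 0 2 4 5 7) (D 0 2 3 6 7) true false _ h_02347 h_02567 h_02357 h_02467 h_02457).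
    apply: (etrans _ (gp 0 2 7 3 4 5 6)). rewrite (sw3 0 2 7 3 4) (sw4 0 2 3 7 4) (sw3 0 2 7 5 6) (sw4 0 2 5 7 6) (sw3 0 2 7 3 5) (sw4 0 2 3 7 5) (sw3 0 2 7 4 6) (sw4 0 2 4 7 6) (sw3 0 2 7 3 6) (sw4 0 2 3 7 6) (sw3 0 2 7 4 5) (sw4 0 2 4 7 5). rewrite /sg /=; ring.
  have h_02358 : 0 < sg true * D 0 2 3 5 8.
    apply: (@gstep _ (sg false * D 0 2 3 4 8) (sg false * D 0 2 5 7 8) (sg true * D 0 2 3 7 8) (sg true * D 0 2 4 5 8) (sg true * D 0 2 4 7 8) (D 0 2 3 5 8) false false _ h_02348 h_02578 h_02378 h_02458 h_02478).
    apply: (etrans _ (gp 0 2 8 3 4 5 7)). rewrite (sw3 0 2 8 3 4) (sw4 0 2 3 8 4) (sw3 0 2 8 5 7) (sw4 0 2 5 8 7) (sw3 0 2 8 3 5) (sw4 0 2 3 8 5) (sw3 0 2 8 4 7) (sw4 0 2 4 8 7) (sw3 0 2 8 3 7) (sw4 0 2 3 8 7) (sw3 0 2 8 4 5) (sw4 0 2 4 8 5). rewrite /sg /=; ring.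
  have h_02368 : 0 < sg true * D 0 2 3 6 8.
    apply: (@gstep _ (sg false * D 0 2 3 5 6) (sg true * D 0 2 3 7 8) (sg true * D 0 2 3 5 8) (sg false * D 0 2 3 6 7) (sg false * D 0 2 3 5 7) (D 0 2 3 6 8) true true _ h_02356 h_02378 h_02358 h_02367 h_02357).
    apply: (etrans _ (gp 0 2 3 5 6 7 8)). rewrite /sg /=; ring.
  have h_02389 : 0 < sg false * D 0 2 3 8 9.
    apply: (@gstep _ (sg false * D 0 2 3 4 8) (sg false * D 0 2 5 8 9) (sg true * D 0 2 3 5 8) (sg false * D 0 2 4 8 9) (sg true * D 0 2 4 5 8) (D 0 2 3 8 9) true false _ h_02348 h_02589 h_02358 h_02489 h_02458).
    apply: (etrans _ (gp 0 2 8 3 4 5 9)). rewrite (sw3 0 2 8 3 4) (sw4 0 2 3 8 4) (sw3 0 2 8 5 9) (sw3 0 2 8 3 5) (sw4 0 2 3 8 5) (sw3 0 2 8 4 9) (sw3 0 2 8 3 9) (sw3 0 2 8 4 5) (sw4 0 2 4 8 5). rewrite /sg /=; ring.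
  have h_02369 : 0 < sg true * D 0 2 3 6 9.
    apply: (@gstep _ (sg false * D 0 2 3 5 6) (sg false * D 0 2 3 8 9) (sg true * D 0 2 3 5 9) (sg true * D 0 2 3 6 8) (sg true * D 0 2 3 5 8) (D 0 2 3 6 9) false false _ h_02356 h_02389 h_02359 h_02368 h_02358).
    apply: (etrans _ (gp 0 2 3 5 6 8 9)). rewrite /sg /=; ring.
  have h_01236 : 0 < sg false * D 0 1 2 3 6.
    apply: (@gstep _ (sg true * D 0 1 2 5 6) (sg true * D 0 2 3 6 9) (sg true * D 0 1 2 6 9) (sg false * D 0 2 3 5 6) (sg false * D 0 2 5 6 9) (D 0 1 2 3 6) true false _ h_01256 h_02369 h_01269 h_02356 h_02569).
    apply: (etrans _ (gp 0 2 6 1 3 5 9)). rewrite (sw3 0 2 6 1 3) (sw4 0 2 1 6 3) (sw2 0 2 1 3 6) (sw3 0 2 6 5 9) (sw3 0 2 6 1 5) (sw4 0 2 1 6 5) (sw2 0 2 1 5 6) (sw3 0 2 6 3 9) (sw3 0 2 6 1 9) (sw2 0 2 1 6 9) (sw3 0 2 6 3 5) (sw4 0 2 3 6 5). rewrite /sg /=; ring.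
  have h_02689 : 0 < sg false * D 0 2 6 8 9.
    apply: (@gstep _ (sg true * D 0 2 3 6 8) (sg false * D 0 2 5 8 9) (sg false * D 0 2 3 8 9) (sg false * D 0 2 5 6 8) (sg true * D 0 2 3 5 8) (D 0 2 6 8 9) true false _ h_02368 h_02589 h_02389 h_02568 h_02358).
    apply: (etrans _ (gp 0 2 8 3 5 6 9)). rewrite (sw3 0 2 8 3 5) (sw4 0 2 3 8 5) (sw3 0 2 8 6 9) (sw3 0 2 8 3 6) (sw4 0 2 3 8 6) (sw3 0 2 8 5 9) (sw3 0 2 8 3 9) (sw3 0 2 8 5 6) (sw4 0 2 5 8 6). rewrite /sg /=; ring.
  have h_01268 : 0 < sg true * D 0 1 2 6 8.
    apply: (@gstep _ (sg false * D 0 1 2 3 6) (sg false * D 0 2 6 8 9) (sg true * D 0 1 2 6 9) (sg true * D 0 2 3 6 8) (sg true * D 0 2 3 6 9) (D 0 1 2 6 8) true true _ h_01236 h_02689 h_01269 h_02368 h_02369).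
    apply: (etrans _ (gp 0 2 6 1 3 8 9)). rewrite (sw3 0 2 6 1 3) (sw4 0 2 1 6 3) (sw2 0 2 1 3 6) (sw3 0 2 6 1 8) (sw2 0 2 1 6 8) (sw3 0 2 6 3 9) (sw3 0 2 6 1 9) (sw2 0 2 1 6 9) (sw3 0 2 6 3 8). rewrite /sg /=; ring.
  have h_01278 : 0 < sg true * D 0 1 2 7 8.
    apply: (@gstep _ (sg false * D 0 1 2 4 7) (sg true * D 0 1 2 6 8) (sg true * D 0 1 2 4 8) (sg true * D 0 1 2 6 7) (sg false * D 0 1 2 4 6) (D 0 1 2 7 8) false false _ h_01247 h_01268 h_01248 h_01267 h_01246).
    apply: (etrans _ (gp 0 1 2 4 6 7 8)). rewrite /sg /=; ring.
  have h_01237 : 0 < sg false * D 0 1 2 3 7.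
    apply: (@gstep _ (sg false * D 0 1 2 4 7) (sg true * D 0 2 3 7 8) (sg true * D 0 1 2 7 8) (sg true * D 0 2 3 4 7) (sg true * D 0 2 4 7 8) (D 0 1 2 3 7) false true _ h_01247 h_02378 h_01278 h_02347 h_02478).
    apply: (etrans _ (gp 0 2 7 1 3 4 8)). rewrite (sw3 0 2 7 1 3) (sw4 0 2 1 7 3) (sw2 0 2 1 3 7) (sw3 0 2 7 4 8) (sw3 0 2 7 1 4) (sw4 0 2 1 7 4) (sw2 0 2 1 4 7) (sw3 0 2 7 3 8) (sw3 0 2 7 1 8) (sw2 0 2 1 7 8) (sw3 0 2 7 3 4) (sw4 0 2 3 7 4). rewrite /sg /=; ring.
  have h_01478 : 0 < sg true * D 0 1 4 7 8.
    apply: (@gstep _ (sg false * D 0 1 2 4 7) (sg true * D 0 1 3 7 8) (sg true * D 0 1 2 7 8) (sg true * D 0 1 3 4 7) (sg false * D 0 1 2 3 7) (D 0 1 4 7 8) true true _ h_01247 h_01378 h_01278 h_01347 h_01237).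
    apply: (etrans _ (gp 0 1 7 2 3 4 8)). rewrite (sw3 0 1 7 2 3) (sw4 0 1 2 7 3) (sw3 0 1 7 4 8) (sw3 0 1 7 2 4) (sw4 0 1 2 7 4) (sw3 0 1 7 3 8) (sw3 0 1 7 2 8) (sw3 0 1 7 3 4) (sw4 0 1 3 7 4). rewrite /sg /=; ring.
  have h_01238 : 0 < sg true * D 0 1 2 3 8.
    apply: (@gstep _ (sg true * D 0 1 2 4 8) (sg true * D 0 1 3 7 8) (sg true * D 0 1 2 7 8) (sg false * D 0 1 3 4 8) (sg true * D 0 1 4 7 8) (D 0 1 2 3 8) true true _ h_01248 h_01378 h_01278 h_01348 h_01478).
    apply: (etrans _ (gp 0 1 8 2 3 4 7)). rewrite (sw3 0 1 8 2 3) (sw4 0 1 2 8 3) (sw3 0 1 8 4 7) (sw4 0 1 4 8 7) (sw3 0 1 8 2 4) (sw4 0 1 2 8 4) (sw3 0 1 8 3 7) (sw4 0 1 3 8 7) (sw3 0 1 8 2 7) (sw4 0 1 2 8 7) (sw3 0 1 8 3 4) (sw4 0 1 3 8 4). rewrite /sg /=; ring.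
  have h_01239 : 0 < sg true * D 0 1 2 3 9.
    apply: (@gstep _ (sg false * D 0 1 2 5 9) (sg true * D 0 2 3 6 9) (sg true * D 0 1 2 6 9) (sg true * D 0 2 3 5 9) (sg false * D 0 2 5 6 9) (D 0 1 2 3 9) true true _ h_01259 h_02369 h_01269 h_02359 h_02569).
    apply: (etrans _ (gp 0 2 9 1 3 5 6)). rewrite (sw3 0 2 9 1 3) (sw4 0 2 1 9 3) (sw2 0 2 1 3 9) (sw3 0 2 9 5 6) (sw4 0 2 5 9 6) (sw3 0 2 9 1 5) (sw4 0 2 1 9 5) (sw2 0 2 1 5 9) (sw3 0 2 9 3 6) (sw4 0 2 3 9 6) (sw3 0 2 9 1 6) (sw4 0 2 1 9 6) (sw2 0 2 1 6 9) (sw3 0 2 9 3 5) (sw4 0 2 3 9 5). rewrite /sg /=; ring.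
  have h_13469 : 0 < sg true * D 1 3 4 6 9.
    apply: (@gstep _ (sg false * D 1 3 4 5 6) (sg true * D 1 3 4 7 9) (sg true * D 1 3 4 5 9) (sg false * D 1 3 4 6 7) (sg false * D 1 3 4 5 7) (D 1 3 4 6 9) true true _ h_13456 h_13479 h_13459 h_13467 h_13457).
    apply: (etrans _ (gp 1 3 4 5 6 7 9)). rewrite /sg /=; ring.
  have h_01369 : 0 < sg false * D 0 1 3 6 9.
    apply: (@gstep _ (sg false * D 0 1 2 3 6) (sg false * D 1 3 5 6 9) (sg false * D 0 1 3 5 6) (sg true * D 1 2 3 6 9) (sg true * D 1 2 3 5 6) (D 0 1 3 6 9) false true _ h_01236 h_13569 h_01356 h_12369 h_12356).
    apply: (etrans _ (gp 1 3 6 0 2 5 9)). rewrite (sw3 1 3 6 0 2) (sw4 1 3 0 6 2) (sw2 1 3 0 2 6) (sw3 1 0 3 2 6) (sw1 1 0 2 3 6) (sw3 1 3 6 5 9) (sw3 1 3 6 0 5) (sw4 1 3 0 6 5) (sw2 1 3 0 5 6) (sw1 1 0 3 5 6) (sw3 1 3 6 2 9) (sw2 1 3 2 6 9) (sw3 1 3 6 0 9) (sw2 1 3 0 6 9) (sw1 1 0 3 6 9) (sw3 1 3 6 2 5) (sw4 1 3 2 6 5) (sw2 1 3 2 5 6). rewrite /sg /=; ring.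
  have h_01346 : 0 < sg true * D 0 1 3 4 6.
    apply: (@gstep _ (sg false * D 0 1 3 5 6) (sg true * D 1 3 4 6 9) (sg false * D 0 1 3 6 9) (sg false * D 1 3 4 5 6) (sg false * D 1 3 5 6 9) (D 0 1 3 4 6) true true _ h_01356 h_13469 h_01369 h_13456 h_13569).
    apply: (etrans _ (gp 1 3 6 0 4 5 9)). rewrite (sw3 1 3 6 0 4) (sw4 1 3 0 6 4) (sw2 1 3 0 4 6) (sw1 1 0 3 4 6) (sw3 1 3 6 5 9) (sw3 1 3 6 0 5) (sw4 1 3 0 6 5) (sw2 1 3 0 5 6) (sw1 1 0 3 5 6) (sw3 1 3 6 4 9) (sw3 1 3 6 0 9) (sw2 1 3 0 6 9) (sw1 1 0 3 6 9) (sw3 1 3 6 4 5) (sw4 1 3 4 6 5). rewrite /sg /=; ring.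
  have h_01367 : 0 < sg false * D 0 1 3 6 7.
    apply: (@gstep _ (sg true * D 0 1 3 4 6) (sg false * D 1 3 5 6 7) (sg false * D 0 1 3 5 6) (sg false * D 1 3 4 6 7) (sg false * D 1 3 4 5 6) (D 0 1 3 6 7) false true _ h_01346 h_13567 h_01356 h_13467 h_13456).
    apply: (etrans _ (gp 1 3 6 0 4 5 7)). rewrite (sw3 1 3 6 0 4) (sw4 1 3 0 6 4) (sw2 1 3 0 4 6) (sw1 1 0 3 4 6) (sw3 1 3 6 5 7) (sw3 1 3 6 0 5) (sw4 1 3 0 6 5) (sw2 1 3 0 5 6) (sw1 1 0 3 5 6) (sw3 1 3 6 4 7) (sw3 1 3 6 0 7) (sw2 1 3 0 6 7) (sw1 1 0 3 6 7) (sw3 1 3 6 4 5) (sw4 1 3 4 6 5). rewrite /sg /=; ring.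
  have h_01368 : 0 < sg true * D 0 1 3 6 8.
    apply: (@gstep _ (sg false * D 0 1 2 3 6) (sg true * D 0 1 3 7 8) (sg true * D 0 1 2 3 8) (sg false * D 0 1 3 6 7) (sg false * D 0 1 2 3 7) (D 0 1 3 6 8) false false _ h_01236 h_01378 h_01238 h_01367 h_01237).
    apply: (etrans _ (gp 0 1 3 2 6 7 8)). rewrite (sw3 0 1 3 2 6) (sw3 0 1 3 2 7) (sw3 0 1 3 2 8). rewrite /sg /=; ring.
  have h_01389 : 0 < sg true * D 0 1 3 8 9.
    apply: (@gstep _ (sg true * D 0 1 2 3 8) (sg false * D 0 1 3 6 9) (sg true * D 0 1 2 3 9) (sg true * D 0 1 3 6 8) (sg false * D 0 1 2 3 6) (D 0 1 3 8 9) true true _ h_01238 h_01369 h_01239 h_01368 h_01236).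
    apply: (etrans _ (gp 0 1 3 2 6 8 9)). rewrite (sw3 0 1 3 2 6) (sw3 0 1 3 2 8) (sw3 0 1 3 2 9). rewrite /sg /=; ring.
  have h_01358 : 0 < sg true * D 0 1 3 5 8.
    apply: (@gstep _ (sg false * D 0 1 3 4 8) (sg false * D 1 3 5 6 8) (sg true * D 0 1 3 6 8) (sg true * D 1 3 4 5 8) (sg true * D 1 3 4 6 8) (D 0 1 3 5 8) false false _ h_01348 h_13568 h_01368 h_13458 h_13468).
    apply: (etrans _ (gp 1 3 8 0 4 5 6)). rewrite (sw3 1 3 8 0 4) (sw4 1 3 0 8 4) (sw2 1 3 0 4 8) (sw1 1 0 3 4 8) (sw3 1 3 8 5 6) (sw4 1 3 5 8 6) (sw3 1 3 8 0 5) (sw4 1 3 0 8 5) (sw2 1 3 0 5 8) (sw1 1 0 3 5 8) (sw3 1 3 8 4 6) (sw4 1 3 4 8 6) (sw3 1 3 8 0 6) (sw4 1 3 0 8 6) (sw2 1 3 0 6 8) (sw1 1 0 3 6 8) (sw3 1 3 8 4 5) (sw4 1 3 4 8 5). rewrite /sg /=; ring.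
  apply: (@gfalse _ (sg false * D 0 1 3 4 8) (sg false * D 1 3 5 8 9) (sg true * D 0 1 3 5 8) (sg false * D 1 3 4 8 9) (sg true * D 0 1 3 8 9) (sg true * D 1 3 4 5 8) true _ h_01348 h_13589 h_01358 h_13489 h_01389 h_13458).
  apply: (etrans _ (gp 1 3 8 0 4 5 9)). rewrite (sw3 1 3 8 0 4) (sw4 1 3 0 8 4) (sw2 1 3 0 4 8) (sw1 1 0 3 4 8) (sw3 1 3 8 5 9) (sw3 1 3 8 0 5) (sw4 1 3 0 8 5) (sw2 1 3 0 5 8) (sw1 1 0 3 5 8) (sw3 1 3 8 4 9) (sw3 1 3 8 0 9) (sw2 1 3 0 8 9) (sw1 1 0 3 8 9) (sw3 1 3 8 4 5) (sw4 1 3 4 8 5). rewrite /sg /=; ring.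
Qed.

Lemma cert (R : realFieldType) (D : nat -> nat -> nat -> nat -> nat -> R)
  (sw1 : forall a b c d e, D a b c d e = - D b a c d e)
  (sw2 : forall a b c d e, D a b c d e = - D a c b d e)
  (sw3 : forall a b c d e, D a b c d e = - D a b d c e)
  (sw4 : forall a b c d e, D a b c d e = - D a b c e d)
  (gp : forall a b c d e f g, D a b c d e * D a b c f g - D a b c d f * D a b c e g
                              + D a b c d g * D a b c e f = 0)
  (fac : forall a b c d x y, [&& (a,b,c,d) \in facl, x \notin [:: a; b; c; d],
           y \notin [:: a; b; c; d], (x < 10)%N & (y < 10)%N] ->
         0 < D a b c d x * D a b c d y) : False.
Proof.
have h := fac 0 2 4 7 1 1 isT.
have e : D 0 2 4 7 1 = - D 0 1 2 4 7.
  by rewrite (sw4 0 2 4 7 1) (sw3 0 2 4 1 7) (sw2 0 2 1 4 7) !opprK.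
case: (ltgtP 0 (D 0 1 2 4 7)) => hr.
- exact: (@cert_half R D sw1 sw2 sw3 sw4 gp fac hr).
- apply: (@cert_half R (fun a b c d e => - D a b c d e)).
  + by move=> *; rewrite sw1.
  + by move=> *; rewrite sw2.
  + by move=> *; rewrite sw3.
  + by move=> *; rewrite sw4.
  + by move=> *; rewrite !mulrNN gp.
  + by move=> *; rewrite mulrNN fac.
  + by rewrite oppr_gt0.
- by move: h; rewrite e -hr oppr0 mulr0 ltxx.
Qed.


Lemma in_consr (T : eqType) (x y : T) s : x \in s -> x \in y :: s.
Proof. by move=> h; rewrite inE h orbT. Qed.
Lemma in_catr (T : eqType) (x : T) s1 s2 : x \in s2 -> x \in s1 ++ s2.
Proof. by move=> h; rewrite mem_cat h orbT. Qed.
Lemma in_heq (T : eqType) (x y : T) s : x = y -> x \in y :: s.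
Proof. by move=> ->; rewrite mem_head. Qed.
Ltac walk := repeat first [ (apply: in_heq; reflexivity) | apply: in_consr | apply: in_catr ].
Lemma base_sub (m : nat) (F : seq int) :
  F \in [:: [:: 1; 2; 3; 5]; [:: - 1; - 2; 3; 5]; [:: 1; - 2; 3; 5]; [:: 1; - 2; - 4; 5];
            [:: - 2; - 3; - 4; 5]; [:: 1; 2; - 3; 4]; [:: 1; 2; 3; - 4]; [:: 1; - 2; 3; - 4]] ->
  F \in base_facets m.+4.+1.
Proof.
rewrite /base_facets (_ : (m.+4.+1 - 4 = m.+1)%N) //=.
move=> hF.
do 8 (case/predU1P: hF => [->|hF]; first by walk).
by [].

Qed.

Definition lab (i : nat) : int := if odd i then - (i./2).+1%:Z else (i./2).+1%:Z.
Definition vx (m : nat) (i : nat) : vert m.+4.+1 := (inord (i./2), ~~ odd i).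

Lemma lab_inj : injective lab.
Proof.
move=> i j; rewrite /lab.
have e : forall k, k = (odd k + (k./2).*2)%N by move=> k; rewrite odd_double_half.
case hi: (odd i); case hj: (odd j) => h.
- by move/eqP: h; rewrite eqr_opp => /eqP [] hh; rewrite (e i) (e j) hi hj hh.

- by move/eqP: h; rewrite -subr_eq0 -opprD oppr_eq0 -PoszD.
- by move/eqP: h; rewrite eq_sym -subr_eq0 -opprD oppr_eq0 -PoszD.
- by case: h => hh; rewrite (e i) (e j) hi hj hh.
Qed.

Lemma vtoZ_inj n : injective (@vtoZ n).
Proof.
move=> [i b] [j c]; rewrite /vtoZ /=.
case: b; case: c => h.
- by case: h => /val_inj ->.
- by move/eqP: h; rewrite -subr_eq0 opprK -PoszD.
- by move/eqP: h; rewrite eq_sym -subr_eq0 opprK -PoszD.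
- by move/eqP: h; rewrite eqr_opp => /eqP [] /val_inj ->.
Qed.

Lemma vtoZ_vx m i : (i < 10)%N -> vtoZ (vx m i) = lab i.
Proof.
move=> hi; rewrite /vtoZ /vx /lab /= inordK.
  by case: (odd i).
have : (i./2 < 5)%N by move: i hi; do 10?case=> //.
by move=> h; apply: leq_trans h _.
Qed.

Lemma set_vx m a b c d : (a < 10)%N -> (b < 10)%N -> (c < 10)%N -> (d < 10)%N ->
  [set vx m a; vx m b; vx m c; vx m d] = [set x : vert m.+4.+1 | vtoZ x \in map lab [:: a; b; c; d]].
Proof.
move=> ha hb hc hd; apply/setP => x; rewrite !inE -!orbA.
by rewrite -(vtoZ_vx m a ha) -(vtoZ_vx m b hb) -(vtoZ_vx m c hc) -(vtoZ_vx m d hd) !(inj_eq (@vtoZ_inj _)).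
Qed.

Lemma facl_all (m : nat) (t : nat * nat * nat * nat) : t \in facl ->
  map lab [:: t.1.1.1; t.1.1.2; t.1.2; t.2] \in all_facets m.+4.+1.
Proof.
move=> hF.
case/predU1P: hF => [->|hF]; first by rewrite /all_facets mem_cat; apply/orP; left; apply: base_sub.
case/predU1P: hF => [->|hF]; first by rewrite /all_facets mem_cat; apply/orP; left; apply: base_sub.
case/predU1P: hF => [->|hF]; first by rewrite /all_facets mem_cat; apply/orP; left; apply: base_sub.
case/predU1P: hF => [->|hF]; first by rewrite /all_facets mem_cat; apply/orP; right; apply/mapP; exists (map lab [:: 1; 3; 4; 8]); [apply: base_sub | reflexivity].
case/predU1P: hF => [->|hF]; first by rewrite /all_facets mem_cat; apply/orP; left; apply: base_sub.
case/predU1P: hF => [->|hF]; first by rewrite /all_facets mem_cat; apply/orP; left; apply: base_sub.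
case/predU1P: hF => [->|hF]; first by rewrite /all_facets mem_cat; apply/orP; left; apply: base_sub.
case/predU1P: hF => [->|hF]; first by rewrite /all_facets mem_cat; apply/orP; right; apply/mapP; exists (map lab [:: 0; 3; 4; 7]); [apply: base_sub | reflexivity].
case/predU1P: hF => [->|hF]; first by rewrite /all_facets mem_cat; apply/orP; right; apply/mapP; exists (map lab [:: 0; 3; 4; 8]); [apply: base_sub | reflexivity].
case/predU1P: hF => [->|hF]; first by rewrite /all_facets mem_cat; apply/orP; right; apply/mapP; exists (map lab [:: 0; 3; 7; 8]); [apply: base_sub | reflexivity].
case/predU1P: hF => [->|hF]; first by rewrite /all_facets mem_cat; apply/orP; right; apply/mapP; exists (map lab [:: 0; 2; 5; 6]); [apply: base_sub | reflexivity].
case/predU1P: hF => [->|hF]; first by rewrite /all_facets mem_cat; apply/orP; left; apply: base_sub.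
case/predU1P: hF => [->|hF]; first by rewrite /all_facets mem_cat; apply/orP; right; apply/mapP; exists (map lab [:: 0; 2; 4; 7]); [apply: base_sub | reflexivity].
case/predU1P: hF => [->|hF]; first by rewrite /all_facets mem_cat; apply/orP; right; apply/mapP; exists (map lab [:: 0; 2; 4; 8]); [apply: base_sub | reflexivity].
case/predU1P: hF => [->|hF]; first by rewrite /all_facets mem_cat; apply/orP; right; apply/mapP; exists (map lab [:: 3; 5; 7; 8]); [apply: base_sub | reflexivity].
case/predU1P: hF => [->|hF]; first by rewrite /all_facets mem_cat; apply/orP; left; apply: base_sub.
by [].
Qed.

Lemma facl_lt (t : nat * nat * nat * nat) : t \in facl ->
  [&& (t.1.1.1 < 10)%N, (t.1.1.2 < 10)%N, (t.1.2 < 10)%N & (t.2 < 10)%N].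
Proof.
move=> hF; have := allP (isT : all (fun t : nat * nat * nat * nat =>
  [&& (t.1.1.1 < 10)%N, (t.1.1.2 < 10)%N, (t.1.2 < 10)%N & (t.2 < 10)%N]) facl) _ hF.
by [].
Qed.


Theorem mainTheorem7 (R : realType) (n : nat) :
  (5 <= n)%N -> ~ polytopal R (Delta3 n).
Proof.
case: n => [|[|[|[|[|m]]]]] // _ [p [_ hp]].
pose P := fun i => p (vx m i).
apply: (@cert R (fun a b c d e => Dm (P a) (P b) (P c) (P d) (P e))).
- by move=> *; apply: Dm_sw1.
- by move=> *; apply: Dm_sw2.
- by move=> *; apply: Dm_sw3.
- by move=> *; apply: Dm_sw4.
- by move=> *; apply: Dm_gp.
move=> a b c d x y /and5P [hF hx hy hx10 hy10].
have /and4P [ha hb hc hd] := facl_lt _ hF.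
have hS : [set vx m a; vx m b; vx m c; vx m d] \in Delta3 m.+4.+1.
  rewrite inE; apply/hasP; exists (map lab [:: a; b; c; d]).
    exact: (facl_all m _ hF).
  by rewrite set_vx.
have [hface hrk] := (hp _).1 hS.
have nin : forall z, (z < 10)%N -> z \notin [:: a; b; c; d] ->
    vx m z \notin [set vx m a; vx m b; vx m c; vx m d].
  move=> z hz hzn; rewrite set_vx // inE (vtoZ_vx m z hz) (mem_map lab_inj); exact: hzn.
exact: (@facet_prod R _ p _ (vx m a) (vx m b) (vx m c) (vx m d) hface hrk erefl _ _ (nin x hx10 hx) (nin y hy10 hy)).
Qed.
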